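(* Consider the functors $$U_l:lrTORS\to rTORS,\quad U_r:lrTORS\to lTORS,\quad c_l:lTORS\to \mathrm{Pregpd},\quad c_r:rTORS\to\mathrm{Pregpd},\quad env:\mathrm{Pregpd}\to lrTORS$$ described in the context. Then: (i) all five functors are equivalences of categories; (ii) $c_r\circ U_l=c_l\circ U_r$ on the nose (functors written in order of application from right to left here); (iii) the composite $c_l\circ U_r\circ env$ is, on the nose, the identity functor of $\mathrm{Pregpd}$ (and hence so is $c_r\circ U_l\circ env$); (iv) the cyclic composites $env\circ c_l\circ U_r$ ($=env\circ c_r\circ U_l$) on $lrTORS$, $U_r\circ env\circ c_l$ on $lTORS$ and $U_l\circ env\circ c_r$ on $rTORS$ are each naturally isomorphic to the respective identity functor.
   Context: Groupoids are inhabited; composition is written left to right ($f:a\to b$, $g:b\to c$ give $f\circ g:a\to c$). Pregroupoids. A pregroupoid on $A,B$ is an inhabited set $X$ with surjections $\alpha:X\to A$, $\beta:X\to B$ and a partial ternary operation $yx^{-1}z$, defined exactly when $\beta(x)=\beta(y)$ and $\alpha(x)=\alpha(z)$, with $\alpha(yx^{-1}z)=\alpha(y)$, $\beta(yx^{-1}z)=\beta(z)$, satisfying (when defined) $xx^{-1}z=z$, $yx^{-1}x=y$, $vy^{-1}(yx^{-1}z)=vx^{-1}z$, $(yx^{-1}z)z^{-1}w=yx^{-1}w$. Morphisms are triples of maps $A\to A'$, $B\to B'$, $X\to X'$ commuting with $\alpha,\beta$ and preserving the ternary operation. This category is $\mathrm{Pregpd}$. Actions and torsors. A left action of a groupoid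 $\mathbf G$ with object set $A$ on a map $\alpha:X\to A$ assigns to $g\in G_1$ and $x\in X$ with $\alpha(x)=d_1(g)$ an element $g\cdot x$ with $\alpha(g\cdot x)=d_0(g)$, satisfying unit and associativity laws. A morphism $(\mathbf G,X\to A)\to(\mathbf G',X'\to A')$ is a functor $\mathbf G\to\mathbf G'$ and a map $X\to X'$ compatible with the structure maps and actions. The action is a (left) $\mathbf G$-torsor if $X$ is inhabited, $\alpha$ is surjective, and for $x,y\in X$ there is at most one $g$ with $g\cdot x=y$; its orbit set is the quotient $\beta:X\to B:=X/\mathbf G$ by the relation ''$y=g\cdot x$ for some $g$''. $lTORS$ is the full subcategory of left actions consisting of left torsors. Right actions $x\cdot h$ of a groupoid $\mathbf H$ with object set $B$ on $\beta:X\to B$ (defined when $\beta(x)=d_0(h)$, with $\beta(x\cdot h)=d_1(h)$), right torsors and $rTORS$ are defined symmetrically. A bi-action is a span $A\xleftarrow{\alpha}X\xrightarrow{\beta}B$ with a left action of $\mathbf G$ (objects $A$) on $\alpha$ and a right action of $\mathbf H$ (objects $B$) on $\beta$ that commute: $(g\cdot x)\cdot h=g\cdot(x\cdot h)$; morphisms are pairs of functors plus a map of spans compatible with everything. A bitorsor is a bi-action that is a left torsor and a right torsor, such that $\beta$ is the quotient map for the left action's equivalence relation and $\alpha$ the quotient map for the right action's. $lrTORS$ is the full subcategory of bitorsors. $U_r:lrTORS\to lTORS$ and $U_l:lrTORS\to rTORS$ forget the right, resp. left, action. $c_l$: a left $\mathbf G$-torsor $\alpha:X\to A$ with orbit map $\beta:X\to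 B$ is sent to the pregroupoid $A\xleftarrow{\alpha}X\xrightarrow{\beta}B$ with $yx^{-1}z:=g\cdot z$, where $g$ is the unique arrow with $g\cdot x=y$; morphisms go to the induced morphisms. $c_r$: a right $\mathbf H$-torsor $\beta:X\to B$ with orbit map $\alpha:X\to A$ is sent to $A\xleftarrow{\alpha}X\xrightarrow{\beta}B$ with $yx^{-1}z:=y\cdot h$, $h$ the unique arrow with $x\cdot h=z$. Enveloping groupoid $X^+$ of a pregroupoid $A\xleftarrow{\alpha}X\xrightarrow{\beta}B$. On pairs $(x,z)$ with $\alpha(x)=\alpha(z)$ put $(x,z)\sim(y,u)$ iff $\beta(x)=\beta(y)$ and $u=yx^{-1}z$; this is an equivalence relation, the class of $(x,z)$ is written $x^{-1}z$, the set of classes $X^{-1}X$. On pairs $(x,y)$ with $\beta(x)=\beta(y)$ put $(x,y)\approx(z,u)$ iff $\alpha(x)=\alpha(z)$ and $u=yx^{-1}z$; class written $yx^{-1}$, set of classes $XX^{-1}$. $X^+$ has object set $A\sqcup B$ and arrows: $yx^{-1}\in XX^{-1}$ as an arrow $\alpha(y)\to\alpha(x)$; $x^{-1}z\in X^{-1}X$ as an arrow $\beta(x)\to\beta(z)$; $x\in X$ as an arrow $\alpha(x)\to\beta(x)$; and a formal copy $x^{-1}$ of each $x\in X$ as an arrow $\beta(x)\to\alpha(x)$. Composition (left to right), writing elements of $X$ as $x_1,x_2,\dots$: $x_1x_2^{-1}\circ x_3x_4^{-1}=(x_1x_2^{-1}x_3)x_4^{-1}$; $x_1x_2^{-1}\circ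 x_3=x_1x_2^{-1}x_3$; $x_1\circ x_2^{-1}=x_1x_2^{-1}$; $x_1\circ x_2^{-1}x_3=x_1x_2^{-1}x_3$; $x_3^{-1}\circ x_2x_1^{-1}=(x_1x_2^{-1}x_3)^{-1}$; $x_2^{-1}\circ x_3=x_2^{-1}x_3$; $x_3^{-1}x_2\circ x_1^{-1}=(x_1x_2^{-1}x_3)^{-1}$; $x_2^{-1}x_3\circ x_4^{-1}x_5=x_2^{-1}(x_3x_4^{-1}x_5)$. This is a groupoid. For subsets $A,B$ of the object set, $X^+(A,B)$ denotes arrows with domain in $A$, codomain in $B$; thus $X^+(A,B)=X$, $X^+(A,A)=XX^{-1}$, $X^+(B,B)=X^{-1}X$. $env$: a pregroupoid $X$ is sent to the bitorsor $A\xleftarrow{\alpha}X^+(A,B)=X\xrightarrow{\beta}B$ with left action of the groupoid $X^+(A,A)$ (object set $A$) by $g\cdot x:=g\circ x$ and right action of $X^+(B,B)$ (object set $B$) by $x\cdot h:=x\circ h$; morphisms of pregroupoids go to the induced morphisms. *)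

(* Defs.v *)
From Stdlib Require Import ClassicalEpsilon ProofIrrelevance FunctionalExtensionality.

Definition surj {X Y : Type} (f : X -> Y) : Prop := forall y, exists x, f x = y.

Record Cat : Type := {
  Ob : Type;
  Hom : Ob -> Ob -> Type;
  idm : forall a, Hom a a;
  cmp : forall a b c, Hom b c -> Hom a b -> Hom a c }.
Arguments idm {_} _.
Arguments cmp {_ _ _ _} _ _.

Record Functor (C D : Cat) : Type := {
  fo : Ob C -> Ob D;
  fm : forall a b, Hom C a b -> Hom D (fo a) (fo b) }.
Arguments fo {_ _} _ _.
Arguments fm {_ _} _ {_ _} _.

Definition is_functor {C D : Cat} (F : Functor C D) : Prop :=
  (forall a, fm F (idm a) = idm (fo F a)) /\
  (forall a b c (g : Hom C b c) (f : Hom C a b), fm F (cmp g f) = cmp (fm F g) (fm F f)).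

Definition Fid (C : Cat) : Functor C C :=
  {| fo := fun a => a; fm := fun a b f => f |}.

Definition Fcomp {C D E : Cat} (G : Functor D E) (F : Functor C D) : Functor C E :=
  {| fo := fun a => fo G (fo F a); fm := fun a b f => fm G (fm F f) |}.

Definition is_iso {C : Cat} {a b : Ob C} (f : Hom C a b) : Prop :=
  exists g : Hom C b a, cmp g f = idm a /\ cmp f g = idm b.

Definition nat_iso {C D : Cat} (F G : Functor C D) : Prop :=
  exists eta : forall a, Hom D (fo F a) (fo G a),
    (forall a, is_iso (eta a)) /\
    (forall a b (f : Hom C a b), cmp (eta b) (fm F f) = cmp (fm G f) (eta a)).

Definition is_equivalence {C D : Cat} (F : Functor C D) : Prop :=
  is_functor F /\
  exists G : Functor D C, is_functor G /\
    nat_iso (Fcomp G F) (Fid C) /\ nat_iso (Fcomp F G) (Fid D).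

Definition hcast {C : Cat} {a a' b b' : Ob C} (e1 : a = a') (e2 : b = b')
  (f : Hom C a b) : Hom C a' b' :=
  match e1 in _ = a1, e2 in _ = b1 return Hom C a1 b1 with
  | eq_refl, eq_refl => f end.

Definition functor_eq {C D : Cat} (F G : Functor C D) : Prop :=
  exists e : forall a, fo F a = fo G a,
    forall a b (f : Hom C a b), hcast (e a) (e b) (fm F f) = fm G f.

(* Groupoids with object set A: arrows with domain d0 and codomain d1,  *)
(* partial composition written left to right (f then g).               *)

Record GpdData (A : Type) : Type := {
  arr : Type;
  d0 : arr -> A;
  d1 : arr -> A;
  idn : A -> arr;
  gcomp : forall f g : arr, d1 f = d0 g -> arr }.
Arguments arr {_} _.
Arguments d0 {_ _} _.
Arguments d1 {_ _} _.
Arguments idn {_} _ _.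
Arguments gcomp {_ _} _ _ _.

Definition gpd_ax {A : Type} (G : GpdData A) : Prop :=
  inhabited A /\
  (forall a, d0 (idn G a) = a /\ d1 (idn G a) = a) /\
  (forall (f g : arr G) (H : d1 f = d0 g),
      d0 (gcomp f g H) = d0 f /\ d1 (gcomp f g H) = d1 g) /\
  (forall (f : arr G) (H : d1 (idn G (d0 f)) = d0 f), gcomp (idn G (d0 f)) f H = f) /\
  (forall (f : arr G) (H : d1 f = d0 (idn G (d1 f))), gcomp f (idn G (d1 f)) H = f) /\
  (forall (f g h : arr G) (H1 : d1 f = d0 g) (H2 : d1 (gcomp f g H1) = d0 h)
          (H3 : d1 g = d0 h) (H4 : d1 f = d0 (gcomp g h H3)),
      gcomp (gcomp f g H1) h H2 = gcomp f (gcomp g h H3) H4) /\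
  (forall f : arr G, exists (g : arr G) (H1 : d1 f = d0 g) (H2 : d1 g = d0 f),
      gcomp f g H1 = idn G (d0 f) /\ gcomp g f H2 = idn G (d1 f)).

Definition gfun_ax {A A' : Type} (G : GpdData A) (G' : GpdData A') (m : A -> A')
  (F : arr G -> arr G') : Prop :=
  (forall g, d0 (F g) = m (d0 g) /\ d1 (F g) = m (d1 g)) /\
  (forall a, F (idn G a) = idn G' (m a)) /\
  (forall (f g : arr G) (H : d1 f = d0 g) (H' : d1 (F f) = d0 (F g)),
      F (gcomp f g H) = gcomp (F f) (F g) H').

Definition lact_ax {A X : Type} (al : X -> A) (G : GpdData A)
  (act : forall (g : arr G) (x : X), al x = d1 g -> X) : Prop :=
  (forall g x H, al (act g x H) = d0 g) /\
  (forall x (H : al x = d1 (idn G (al x))), act (idn G (al x)) x H = x) /\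
  (forall (g h : arr G) (x : X) (H1 : al x = d1 h) (H2 : al (act h x H1) = d1 g)
          (H3 : d1 g = d0 h) (H4 : al x = d1 (gcomp g h H3)),
      act g (act h x H1) H2 = act (gcomp g h H3) x H4).

Definition ract_ax {B X : Type} (be : X -> B) (G : GpdData B)
  (act : forall (x : X) (h : arr G), be x = d0 h -> X) : Prop :=
  (forall x h H, be (act x h H) = d1 h) /\
  (forall x (H : be x = d0 (idn G (be x))), act x (idn G (be x)) H = x) /\
  (forall (x : X) (h k : arr G) (H1 : be x = d0 h) (H2 : be (act x h H1) = d0 k)
          (H3 : d1 h = d0 k) (H4 : be x = d0 (gcomp h k H3)),
      act (act x h H1) k H2 = act x (gcomp h k H3) H4).

Record LTData : Type := {
  lt_A : Type; lt_B : Type; lt_X : Type;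
  lt_al : lt_X -> lt_A; lt_be : lt_X -> lt_B;
  lt_G : GpdData lt_A;
  lt_act : forall (g : arr lt_G) (x : lt_X), lt_al x = d1 g -> lt_X }.

Definition ltors_ax (T : LTData) : Prop :=
  gpd_ax (lt_G T) /\ lact_ax (lt_al T) (lt_G T) (lt_act T) /\
  inhabited (lt_X T) /\ surj (lt_al T) /\
  (forall (g g' : arr (lt_G T)) x H H',
      lt_act T g x H = lt_act T g' x H' -> g = g') /\
  surj (lt_be T) /\
  (forall x y, lt_be T x = lt_be T y <-> exists g H, lt_act T g x H = y).

Record LTors : Type := { ltd :> LTData; ltax : ltors_ax ltd }.

Record LTHomData (T T' : LTData) : Type := {
  lh_A : lt_A T -> lt_A T'; lh_B : lt_B T -> lt_B T'; lh_X : lt_X T -> lt_X T';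
  lh_G : arr (lt_G T) -> arr (lt_G T') }.
Arguments lh_A {_ _} _ _.
Arguments lh_B {_ _} _ _.
Arguments lh_X {_ _} _ _.
Arguments lh_G {_ _} _ _.

Definition lthom_ax {T T' : LTData} (f : LTHomData T T') : Prop :=
  gfun_ax (lt_G T) (lt_G T') (lh_A f) (lh_G f) /\
  (forall x, lt_al T' (lh_X f x) = lh_A f (lt_al T x)) /\
  (forall x, lt_be T' (lh_X f x) = lh_B f (lt_be T x)) /\
  (forall g x H H', lh_X f (lt_act T g x H) = lt_act T' (lh_G f g) (lh_X f x) H').

Record LTHom (T T' : LTors) : Type := { lthd :> LTHomData T T'; lthax : lthom_ax lthd }.
Arguments lthd {_ _} _.
Arguments lthax {_ _} _.

Record RTData : Type := {
  rt_A : Type; rt_B : Type; rt_X : Type;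
  rt_al : rt_X -> rt_A; rt_be : rt_X -> rt_B;
  rt_H : GpdData rt_B;
  rt_act : forall (x : rt_X) (h : arr rt_H), rt_be x = d0 h -> rt_X }.

Definition rtors_ax (T : RTData) : Prop :=
  gpd_ax (rt_H T) /\ ract_ax (rt_be T) (rt_H T) (rt_act T) /\
  inhabited (rt_X T) /\ surj (rt_be T) /\
  (forall (h h' : arr (rt_H T)) x H H',
      rt_act T x h H = rt_act T x h' H' -> h = h') /\
  surj (rt_al T) /\
  (forall x y, rt_al T x = rt_al T y <-> exists h H, rt_act T x h H = y).

Record RTors : Type := { rtd :> RTData; rtax : rtors_ax rtd }.

Record RTHomData (T T' : RTData) : Type := {
  rh_A : rt_A T -> rt_A T'; rh_B : rt_B T -> rt_B T'; rh_X : rt_X T -> rt_X T';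
  rh_H : arr (rt_H T) -> arr (rt_H T') }.
Arguments rh_A {_ _} _ _.
Arguments rh_B {_ _} _ _.
Arguments rh_X {_ _} _ _.
Arguments rh_H {_ _} _ _.

Definition rthom_ax {T T' : RTData} (f : RTHomData T T') : Prop :=
  gfun_ax (rt_H T) (rt_H T') (rh_B f) (rh_H f) /\
  (forall x, rt_al T' (rh_X f x) = rh_A f (rt_al T x)) /\
  (forall x, rt_be T' (rh_X f x) = rh_B f (rt_be T x)) /\
  (forall x h H H', rh_X f (rt_act T x h H) = rt_act T' (rh_X f x) (rh_H f h) H').

Record RTHom (T T' : RTors) : Type := { rthd :> RTHomData T T'; rthax : rthom_ax rthd }.
Arguments rthd {_ _} _.
Arguments rthax {_ _} _.

Record BTData : Type := {
  bt_A : Type; bt_B : Type; bt_X : Type;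
  bt_al : bt_X -> bt_A; bt_be : bt_X -> bt_B;
  bt_G : GpdData bt_A; bt_H : GpdData bt_B;
  bt_lact : forall (g : arr bt_G) (x : bt_X), bt_al x = d1 g -> bt_X;
  bt_ract : forall (x : bt_X) (h : arr bt_H), bt_be x = d0 h -> bt_X }.

Definition bt_left (T : BTData) : LTData :=
  {| lt_A := bt_A T; lt_B := bt_B T; lt_X := bt_X T; lt_al := bt_al T; lt_be := bt_be T;
     lt_G := bt_G T; lt_act := bt_lact T |}.
Definition bt_right (T : BTData) : RTData :=
  {| rt_A := bt_A T; rt_B := bt_B T; rt_X := bt_X T; rt_al := bt_al T; rt_be := bt_be T;
     rt_H := bt_H T; rt_act := bt_ract T |}.

Definition btors_ax (T : BTData) : Prop :=
  ltors_ax (bt_left T) /\ rtors_ax (bt_right T) /\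
  (forall (g : arr (bt_G T)) (x : bt_X T) (h : arr (bt_H T))
          (H1 : bt_be T x = d0 h) (H2 : bt_al T (bt_ract T x h H1) = d1 g)
          (H3 : bt_al T x = d1 g) (H4 : bt_be T (bt_lact T g x H3) = d0 h),
      bt_lact T g (bt_ract T x h H1) H2 = bt_ract T (bt_lact T g x H3) h H4).

Record BTors : Type := { btd :> BTData; btax : btors_ax btd }.

Record BTHomData (T T' : BTData) : Type := {
  bh_A : bt_A T -> bt_A T'; bh_B : bt_B T -> bt_B T'; bh_X : bt_X T -> bt_X T';
  bh_G : arr (bt_G T) -> arr (bt_G T'); bh_H : arr (bt_H T) -> arr (bt_H T') }.
Arguments bh_A {_ _} _ _.
Arguments bh_B {_ _} _ _.
Arguments bh_X {_ _} _ _.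
Arguments bh_G {_ _} _ _.
Arguments bh_H {_ _} _ _.

Definition bh_left {T T' : BTData} (f : BTHomData T T') : LTHomData (bt_left T) (bt_left T') :=
  @Build_LTHomData (bt_left T) (bt_left T') (bh_A f) (bh_B f) (bh_X f) (bh_G f).
Definition bh_right {T T' : BTData} (f : BTHomData T T') : RTHomData (bt_right T) (bt_right T') :=
  @Build_RTHomData (bt_right T) (bt_right T') (bh_A f) (bh_B f) (bh_X f) (bh_H f).

Definition bthom_ax {T T' : BTData} (f : BTHomData T T') : Prop :=
  lthom_ax (bh_left f) /\ rthom_ax (bh_right f).

Record BTHom (T T' : BTors) : Type := { bthd :> BTHomData T T'; bthax : bthom_ax bthd }.
Arguments bthd {_ _} _.
Arguments bthax {_ _} _.

(* Pregroupoids.  [pop x y z H1 H2] is  y x^{-1} z .                    *)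

Record PData : Type := {
  pA : Type; pB : Type; pX : Type;
  pal : pX -> pA; pbe : pX -> pB;
  pop : forall x y z : pX, pbe x = pbe y -> pal x = pal z -> pX }.

Definition pregpd_ax (P : PData) : Prop :=
  inhabited (pX P) /\ surj (pal P) /\ surj (pbe P) /\
  (forall x y z H1 H2, pal P (pop P x y z H1 H2) = pal P y /\
                       pbe P (pop P x y z H1 H2) = pbe P z) /\
  (forall x z H1 H2, pop P x x z H1 H2 = z) /\
  (forall x y H1 H2, pop P x y x H1 H2 = y) /\
  (forall x y z v (H1 : pbe P x = pbe P y) (H2 : pal P x = pal P z)
          (H3 : pbe P y = pbe P v) (H4 : pal P y = pal P (pop P x y z H1 H2))
          (H5 : pbe P x = pbe P v) (H6 : pal P x = pal P z),
      pop P y v (pop P x y z H1 H2) H3 H4 = pop P x v z H5 H6) /\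
  (forall x y z w (H1 : pbe P x = pbe P y) (H2 : pal P x = pal P z)
          (H3 : pbe P z = pbe P (pop P x y z H1 H2)) (H4 : pal P z = pal P w)
          (H5 : pbe P x = pbe P y) (H6 : pal P x = pal P w),
      pop P z (pop P x y z H1 H2) w H3 H4 = pop P x y w H5 H6).

Record Pregpd : Type := { pd :> PData; pax : pregpd_ax pd }.

Record PHomData (P P' : PData) : Type := {
  ph_A : pA P -> pA P'; ph_B : pB P -> pB P'; ph_X : pX P -> pX P' }.
Arguments ph_A {_ _} _ _.
Arguments ph_B {_ _} _ _.
Arguments ph_X {_ _} _ _.

Definition phom_ax {P P' : PData} (f : PHomData P P') : Prop :=
  (forall x, pal P' (ph_X f x) = ph_A f (pal P x)) /\
  (forall x, pbe P' (ph_X f x) = ph_B f (pbe P x)) /\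
  (forall x y z H1 H2 H1' H2',
      ph_X f (pop P x y z H1 H2) = pop P' (ph_X f x) (ph_X f y) (ph_X f z) H1' H2').

Record PHom (P P' : Pregpd) : Type := { phd :> PHomData P P'; phax : phom_ax phd }.
Arguments phd {_ _} _.
Arguments phax {_ _} _.

Lemma gfun_id {A} (G : GpdData A) : gfun_ax G G (fun a => a) (fun g => g).
Proof.
  split; [|split]; auto.
  intros f g H H'. rewrite (proof_irrelevance _ H H'). reflexivity.
Qed.

Lemma gfun_comp {A A' A''} (G : GpdData A) (G' : GpdData A') (G'' : GpdData A'')
  m F m' F' : gfun_ax G G' m F -> gfun_ax G' G'' m' F' ->
  gfun_ax G G'' (fun a => m' (m a)) (fun g => F' (F g)).
Proof.
  intros [h1 [h2 h3]] [k1 [k2 k3]]. split; [|split].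
  - intro g. destruct (h1 g) as [e1 e2]. destruct (k1 (F g)) as [e3 e4].
    rewrite e3, e4, e1, e2. split; reflexivity.
  - intro a. rewrite h2, k2. reflexivity.
  - intros f g H H'.
    assert (H0 : d1 (F f) = d0 (F g)).
    { destruct (h1 f) as [_ e1]. destruct (h1 g) as [e2 _]. rewrite e1, e2, H. reflexivity. }
    rewrite (h3 f g H H0). apply k3.
Qed.

Definition lthom_id (T : LTors) : LTHom T T.
Proof.
  refine {| lthd := @Build_LTHomData T T (fun a => a) (fun b => b) (fun x => x) (fun g => g) |}.
  split; [apply gfun_id|split; [|split]]; try reflexivity.
  intros g x H H'. simpl. rewrite (proof_irrelevance _ H H'). reflexivity.
Defined.

Definition lthom_comp (T T' T'' : LTors) (g : LTHom T' T'') (f : LTHom T T') : LTHom T T''.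
Proof.
  refine {| lthd := @Build_LTHomData T T'' (fun a => lh_A g (lh_A f a))
             (fun b => lh_B g (lh_B f b)) (fun x => lh_X g (lh_X f x))
             (fun k => lh_G g (lh_G f k)) |}.
  destruct f as [f [f1 [f2 [f3 f4]]]]; destruct g as [g [g1 [g2 [g3 g4]]]]; simpl.
  split; [apply (gfun_comp _ _ _ _ _ _ _ f1 g1)|split; [|split]]; simpl.
  - intro x. rewrite g2, f2. reflexivity.
  - intro x. rewrite g3, f3. reflexivity.
  - intros k x H H'.
    assert (H0 : lt_al T' (lh_X f x) = d1 (lh_G f k)).
    { rewrite f2, H. destruct f1 as [f1 _]. destruct (f1 k) as [_ e]. rewrite e. reflexivity. }
    rewrite (f4 k x H H0). apply g4.
Defined.

Definition LTCat : Cat :=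
  {| Ob := LTors; Hom := LTHom; idm := lthom_id; cmp := lthom_comp |}.

Definition rthom_id (T : RTors) : RTHom T T.
Proof.
  refine {| rthd := @Build_RTHomData T T (fun a => a) (fun b => b) (fun x => x) (fun g => g) |}.
  split; [apply gfun_id|split; [|split]]; try reflexivity.
  intros x h H H'. simpl. rewrite (proof_irrelevance _ H H'). reflexivity.
Defined.

Definition rthom_comp (T T' T'' : RTors) (g : RTHom T' T'') (f : RTHom T T') : RTHom T T''.
Proof.
  refine {| rthd := @Build_RTHomData T T'' (fun a => rh_A g (rh_A f a))
             (fun b => rh_B g (rh_B f b)) (fun x => rh_X g (rh_X f x))
             (fun k => rh_H g (rh_H f k)) |}.
  destruct f as [f [f1 [f2 [f3 f4]]]]; destruct g as [g [g1 [g2 [g3 g4]]]]; simpl.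
  split; [apply (gfun_comp _ _ _ _ _ _ _ f1 g1)|split; [|split]]; simpl.
  - intro x. rewrite g2, f2. reflexivity.
  - intro x. rewrite g3, f3. reflexivity.
  - intros x k H H'.
    assert (H0 : rt_be T' (rh_X f x) = d0 (rh_H f k)).
    { rewrite f3, H. destruct f1 as [f1 _]. destruct (f1 k) as [e _]. rewrite e. reflexivity. }
    rewrite (f4 x k H H0). apply g4.
Defined.

Definition RTCat : Cat :=
  {| Ob := RTors; Hom := RTHom; idm := rthom_id; cmp := rthom_comp |}.

Definition bt_lt (T : BTors) : LTors := {| ltd := bt_left T; ltax := proj1 (btax T) |}.
Definition bt_rt (T : BTors) : RTors := {| rtd := bt_right T; rtax := proj1 (proj2 (btax T)) |}.
Definition bh_lt {T T' : BTors} (f : BTHom T T') : LTHom (bt_lt T) (bt_lt T') :=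
  @Build_LTHom (bt_lt T) (bt_lt T') (bh_left f) (proj1 (bthax f)).
Definition bh_rt {T T' : BTors} (f : BTHom T T') : RTHom (bt_rt T) (bt_rt T') :=
  @Build_RTHom (bt_rt T) (bt_rt T') (bh_right f) (proj2 (bthax f)).

Definition bthom_id (T : BTors) : BTHom T T.
Proof.
  refine {| bthd := @Build_BTHomData T T (fun a => a) (fun b => b) (fun x => x)
                      (fun g => g) (fun h => h) |}.
  split.
  - exact (lthax (lthom_id (bt_lt T))).
  - exact (rthax (rthom_id (bt_rt T))).
Defined.

Definition bthom_comp (T T' T'' : BTors) (g : BTHom T' T'') (f : BTHom T T') : BTHom T T''.
Proof.
  refine {| bthd := @Build_BTHomData T T'' (fun a => bh_A g (bh_A f a))
             (fun b => bh_B g (bh_B f b)) (fun x => bh_X g (bh_X f x))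
             (fun k => bh_G g (bh_G f k)) (fun k => bh_H g (bh_H f k)) |}.
  split.
  - exact (lthax (lthom_comp _ _ _ (bh_lt g) (bh_lt f))).
  - exact (rthax (rthom_comp _ _ _ (bh_rt g) (bh_rt f))).
Defined.

Definition BTCat : Cat :=
  {| Ob := BTors; Hom := BTHom; idm := bthom_id; cmp := bthom_comp |}.

Definition phom_id (P : Pregpd) : PHom P P.
Proof.
  refine {| phd := @Build_PHomData P P (fun a => a) (fun b => b) (fun x => x) |}.
  split; [|split]; try reflexivity.
  intros x y z H1 H2 H1' H2'. simpl.
  rewrite (proof_irrelevance _ H1 H1'), (proof_irrelevance _ H2 H2'). reflexivity.
Defined.

Definition phom_comp (P P' P'' : Pregpd) (g : PHom P' P'') (f : PHom P P') : PHom P P''.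
Proof.
  refine {| phd := @Build_PHomData P P'' (fun a => ph_A g (ph_A f a))
             (fun b => ph_B g (ph_B f b)) (fun x => ph_X g (ph_X f x)) |}.
  destruct f as [f [f1 [f2 f3]]]; destruct g as [g [g1 [g2 g3]]]; unfold phom_ax; cbn.
  split; [|split].
  - intro x. rewrite g1, f1. reflexivity.
  - intro x. rewrite g2, f2. reflexivity.
  - intros x y z H1 H2 H1' H2'.
    assert (K1 : pbe P' (ph_X f x) = pbe P' (ph_X f y)) by (rewrite !f2, H1; reflexivity).
    assert (K2 : pal P' (ph_X f x) = pal P' (ph_X f z)) by (rewrite !f1, H2; reflexivity).
    rewrite (f3 x y z H1 H2 K1 K2). apply g3.
Defined.

Definition PCat : Cat :=
  {| Ob := Pregpd; Hom := PHom; idm := phom_id; cmp := phom_comp |}.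

Definition U_r : Functor BTCat LTCat :=
  {| fo := (bt_lt : Ob BTCat -> Ob LTCat);
     fm := fun (T T' : BTors) (f : BTHom T T') => (bh_lt f : Hom LTCat (bt_lt T) (bt_lt T')) |}.

Definition U_l : Functor BTCat RTCat :=
  {| fo := (bt_rt : Ob BTCat -> Ob RTCat);
     fm := fun (T T' : BTors) (f : BTHom T T') => (bh_rt f : Hom RTCat (bt_rt T) (bt_rt T')) |}.

(* c_l : lTORS -> Pregpd      y x^{-1} z := g . z  where g . x = y      *)

Lemma lt_orbit (T : LTors) (x y : lt_X T) :
  lt_be T x = lt_be T y -> exists g H, lt_act T g x H = y.
Proof. destruct (ltax T) as (_&_&_&_&_&_&Q). apply Q. Qed.

Definition cl_arrow (T : LTors) (x y : lt_X T) (H : lt_be T x = lt_be T y)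
  : {g : arr (lt_G T) | exists H', lt_act T g x H' = y} :=
  constructive_indefinite_description _ (lt_orbit T x y H).

Lemma cl_arrow_d1 (T : LTors) (x y z : lt_X T)
  (s : {g : arr (lt_G T) | exists H', lt_act T g x H' = y})
  (H2 : lt_al T x = lt_al T z) : lt_al T z = d1 (proj1_sig s).
Proof. destruct s as [g Hg]. simpl. destruct Hg as [H' _]. rewrite <- H2. exact H'. Qed.

Definition cl_op (T : LTors) (x y z : lt_X T)
  (H1 : lt_be T x = lt_be T y) (H2 : lt_al T x = lt_al T z) : lt_X T :=
  lt_act T (proj1_sig (cl_arrow T x y H1)) z (cl_arrow_d1 T x y z (cl_arrow T x y H1) H2).

Definition cl_data (T : LTors) : PData :=
  {| pA := lt_A T; pB := lt_B T; pX := lt_X T; pal := lt_al T; pbe := lt_be T;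
     pop := cl_op T |}.

Definition cl_hom_data {T T' : LTors} (f : LTHom T T') : PHomData (cl_data T) (cl_data T') :=
  @Build_PHomData (cl_data T) (cl_data T') (lh_A f) (lh_B f) (lh_X f).

(* the functor c_l, given the facts that the construction is well defined *)
Definition c_l (hcl : forall T : LTors, pregpd_ax (cl_data T))
  (hclm : forall (T T' : LTors) (f : LTHom T T'), phom_ax (cl_hom_data f))
  : Functor LTCat PCat :=
  {| fo := (fun T : LTors => {| pd := cl_data T; pax := hcl T |}) : Ob LTCat -> Ob PCat;
     fm := fun (T T' : LTors) (f : LTHom T T') =>
       (@Build_PHom {| pd := cl_data T; pax := hcl T |} {| pd := cl_data T'; pax := hcl T' |}
          (cl_hom_data f) (hclm T T' f)) |}.

(* c_r : rTORS -> Pregpd      y x^{-1} z := y . h  where x . h = z      *)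

Lemma rt_orbit (T : RTors) (x z : rt_X T) :
  rt_al T x = rt_al T z -> exists h H, rt_act T x h H = z.
Proof. destruct (rtax T) as (_&_&_&_&_&_&Q). apply Q. Qed.

Definition cr_arrow (T : RTors) (x z : rt_X T) (H : rt_al T x = rt_al T z)
  : {h : arr (rt_H T) | exists H', rt_act T x h H' = z} :=
  constructive_indefinite_description _ (rt_orbit T x z H).

Lemma cr_arrow_d0 (T : RTors) (x y z : rt_X T)
  (s : {h : arr (rt_H T) | exists H', rt_act T x h H' = z})
  (H1 : rt_be T x = rt_be T y) : rt_be T y = d0 (proj1_sig s).
Proof. destruct s as [h Hh]. simpl. destruct Hh as [H' _]. rewrite <- H1. exact H'. Qed.

Definition cr_op (T : RTors) (x y z : rt_X T)
  (H1 : rt_be T x = rt_be T y) (H2 : rt_al T x = rt_al T z) : rt_X T :=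
  rt_act T y (proj1_sig (cr_arrow T x z H2)) (cr_arrow_d0 T x y z (cr_arrow T x z H2) H1).

Definition cr_data (T : RTors) : PData :=
  {| pA := rt_A T; pB := rt_B T; pX := rt_X T; pal := rt_al T; pbe := rt_be T;
     pop := cr_op T |}.

Definition cr_hom_data {T T' : RTors} (f : RTHom T T') : PHomData (cr_data T) (cr_data T') :=
  @Build_PHomData (cr_data T) (cr_data T') (rh_A f) (rh_B f) (rh_X f).

Definition c_r (hcr : forall T : RTors, pregpd_ax (cr_data T))
  (hcrm : forall (T T' : RTors) (f : RTHom T T'), phom_ax (cr_hom_data f))
  : Functor RTCat PCat :=
  {| fo := (fun T : RTors => {| pd := cr_data T; pax := hcr T |}) : Ob RTCat -> Ob PCat;
     fm := fun (T T' : RTors) (f : RTHom T T') =>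
       (@Build_PHom {| pd := cr_data T; pax := hcr T |} {| pd := cr_data T'; pax := hcr T' |}
          (cr_hom_data f) (hcrm T T' f)) |}.

Definition quot {T : Type} (R : T -> T -> Prop) : Type := {S : T -> Prop | exists t, S = R t}.
Definition qcls {T : Type} {R : T -> T -> Prop} (t : T) : quot R :=
  exist _ (R t) (ex_intro _ t eq_refl).
Definition qrep {T : Type} {R : T -> T -> Prop} (c : quot R) : T :=
  proj1_sig (constructive_indefinite_description _ (proj2_sig c)).

Section Env.
Variable P : Pregpd.

Lemma p_op (x y z : pX P) H1 H2 :
  pal P (pop P x y z H1 H2) = pal P y /\ pbe P (pop P x y z H1 H2) = pbe P z.
Proof. destruct (pax P) as (_&_&_&Q&_). apply Q. Qed.

Definition pick_al (a : pA P) : pX P :=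
  proj1_sig (constructive_indefinite_description _ (proj1 (proj2 (pax P)) a)).
Definition pick_be (b : pB P) : pX P :=
  proj1_sig (constructive_indefinite_description _ (proj1 (proj2 (proj2 (pax P))) b)).

(* pairs (x,y) with be x = be y ; the class of (x,y) is  y x^{-1} *)
Definition TR : Type := {p : pX P * pX P | pbe P (fst p) = pbe P (snd p)}.
Definition RR (p q : TR) : Prop :=
  exists H : pal P (fst (proj1_sig p)) = pal P (fst (proj1_sig q)),
    snd (proj1_sig q) =
      pop P (fst (proj1_sig p)) (snd (proj1_sig p)) (fst (proj1_sig q)) (proj2_sig p) H.
Definition XXinv : Type := quot RR.

(* pairs (x,z) with al x = al z ; the class of (x,z) is  x^{-1} z *)
Definition TL : Type := {p : pX P * pX P | pal P (fst p) = pal P (snd p)}.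
Definition RL (p q : TL) : Prop :=
  exists H : pbe P (fst (proj1_sig p)) = pbe P (fst (proj1_sig q)),
    snd (proj1_sig q) =
      pop P (fst (proj1_sig p)) (fst (proj1_sig q)) (snd (proj1_sig p)) H (proj2_sig p).
Definition XinvX : Type := quot RL.

(* the groupoid X^+(A,A) = XX^{-1}:  y x^{-1} : al y -> al x *)
Definition rx (c : XXinv) : pX P := fst (proj1_sig (qrep c)).
Definition ry (c : XXinv) : pX P := snd (proj1_sig (qrep c)).
Definition rxy (c : XXinv) : pbe P (rx c) = pbe P (ry c) := proj2_sig (qrep c).

Definition GLcomp (c1 c2 : XXinv) (H : pal P (rx c1) = pal P (ry c2)) : XXinv :=
  (* (x1 x2^{-1}) o (x3 x4^{-1}) = (x1 x2^{-1} x3) x4^{-1} *)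
  qcls (exist (fun p : pX P * pX P => pbe P (fst p) = pbe P (snd p))
          (rx c2, pop P (rx c1) (ry c1) (ry c2) (rxy c1) H)
          (eq_trans (rxy c2) (eq_sym (proj2 (p_op (rx c1) (ry c1) (ry c2) (rxy c1) H))))).

Definition GL : GpdData (pA P) :=
  {| arr := XXinv;
     d0 := fun c => pal P (ry c);
     d1 := fun c => pal P (rx c);
     idn := fun a => qcls (exist (fun p : pX P * pX P => pbe P (fst p) = pbe P (snd p))
                             (pick_al a, pick_al a) eq_refl);
     gcomp := GLcomp |}.

(* left action  (y x^{-1}) . z = y x^{-1} z *)
Definition lactL (c : arr GL) (z : pX P) (H : pal P z = d1 c) : pX P :=
  pop P (rx c) (ry c) z (rxy c) (eq_sym H).

(* the groupoid X^+(B,B) = X^{-1}X:  x^{-1} z : be x -> be z *)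
Definition lx (c : XinvX) : pX P := fst (proj1_sig (qrep c)).
Definition lz (c : XinvX) : pX P := snd (proj1_sig (qrep c)).
Definition lxz (c : XinvX) : pal P (lx c) = pal P (lz c) := proj2_sig (qrep c).

Definition GRcomp (c1 c2 : XinvX) (H : pbe P (lz c1) = pbe P (lx c2)) : XinvX :=
  (* (x2^{-1} x3) o (x4^{-1} x5) = x2^{-1} (x3 x4^{-1} x5) *)
  qcls (exist (fun p : pX P * pX P => pal P (fst p) = pal P (snd p))
          (lx c1, pop P (lx c2) (lz c1) (lz c2) (eq_sym H) (lxz c2))
          (eq_trans (lxz c1) (eq_sym (proj1 (p_op (lx c2) (lz c1) (lz c2) (eq_sym H) (lxz c2)))))).

Definition GR : GpdData (pB P) :=
  {| arr := XinvX;
     d0 := fun c => pbe P (lx c);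
     d1 := fun c => pbe P (lz c);
     idn := fun b => qcls (exist (fun p : pX P * pX P => pal P (fst p) = pal P (snd p))
                             (pick_be b, pick_be b) eq_refl);
     gcomp := GRcomp |}.

(* right action  w . (x^{-1} z) = w x^{-1} z *)
Definition ractR (w : pX P) (c : arr GR) (H : pbe P w = d0 c) : pX P :=
  pop P (lx c) w (lz c) (eq_sym H) (lxz c).

Definition env_data : BTData :=
  {| bt_A := pA P; bt_B := pB P; bt_X := pX P; bt_al := pal P; bt_be := pbe P;
     bt_G := GL; bt_H := GR; bt_lact := lactL; bt_ract := ractR |}.

End Env.

Definition env_hom_data {P P' : Pregpd} (f : PHom P P') : BTHomData (env_data P) (env_data P').
Proof.
  refine (@Build_BTHomData (env_data P) (env_data P') (ph_A f) (ph_B f) (ph_X f) _ _).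
  -
    intro c. apply qcls.
    exists (ph_X f (rx P c), ph_X f (ry P c)). simpl.
    destruct (phax f) as [fa [fb _]]. rewrite !fb. apply f_equal. exact (rxy P c).
  -
    intro c. apply qcls.
    exists (ph_X f (lx P c), ph_X f (lz P c)). simpl.
    destruct (phax f) as [fa [fb _]]. rewrite !fa. apply f_equal. exact (lxz P c).
Defined.

Definition env (henv : forall P : Pregpd, btors_ax (env_data P))
  (henvm : forall (P P' : Pregpd) (f : PHom P P'), bthom_ax (env_hom_data f))
  : Functor PCat BTCat :=
  {| fo := (fun P : Pregpd => {| btd := env_data P; btax := henv P |}) : Ob PCat -> Ob BTCat;
     fm := fun (P P' : Pregpd) (f : PHom P P') =>
       (@Build_BTHom {| btd := env_data P; btax := henv P |} {| btd := env_data P'; btax := henv P' |}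
          (env_hom_data f) (henvm P P' f)) |}.

(* Main.v *)
Require Import Defs.
From Stdlib Require Import ClassicalEpsilon ProofIrrelevance FunctionalExtensionality PropExtensionality Classical.

Definition dflt {Q : Prop} {T : Type} (f : Q -> T) (d : T) : T :=
  match excluded_middle_informative Q with left q => f q | right _ => d end.
Lemma dflt_eq {Q : Prop} {T : Type} (f : Q -> T) d (q : Q) : dflt f d = f q.
Proof.
  unfold dflt. destruct (excluded_middle_informative Q) as [q'|n].
  - f_equal; apply proof_irrelevance.
  - contradiction.
Qed.

Lemma sig_eq {A : Type} (Pr : A -> Prop) a b (pa : Pr a) (pb : Pr b) : a = b -> exist Pr a pa = exist Pr b pb.
Proof. intros ->. f_equal. apply proof_irrelevance. Qed.

Section PG.
Variable P : PData.
Hypothesis hP : pregpd_ax P.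
Local Notation al := (pal P).
Local Notation be := (pbe P).

Definition opT (x y z : pX P) : pX P :=
  dflt (fun H1 : be x = be y => dflt (fun H2 : al x = al z => pop P x y z H1 H2) x) x.

Lemma opE x y z H1 H2 : pop P x y z H1 H2 = opT x y z.
Proof. unfold opT. rewrite (dflt_eq _ _ H1). rewrite (dflt_eq _ _ H2). reflexivity. Qed.

Lemma op_al x y z : be x = be y -> al x = al z -> al (opT x y z) = al y.
Proof. intros H1 H2. rewrite <- (opE x y z H1 H2). destruct hP as (_&_&_&Q&_). apply Q. Qed.
Lemma op_be x y z : be x = be y -> al x = al z -> be (opT x y z) = be z.
Proof. intros H1 H2. rewrite <- (opE x y z H1 H2). destruct hP as (_&_&_&Q&_). apply Q. Qed.
Lemma op_xxz x z : al x = al z -> opT x x z = z.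
Proof. intros H2. rewrite <- (opE x x z eq_refl H2). destruct hP as (_&_&_&_&Q&_). apply Q. Qed.
Lemma op_xyx x y : be x = be y -> opT x y x = y.
Proof. intros H1. rewrite <- (opE x y x H1 eq_refl). destruct hP as (_&_&_&_&_&Q&_). apply Q. Qed.
Lemma op_P4 x y z v : be x = be y -> al x = al z -> be y = be v ->
  opT y v (opT x y z) = opT x v z.
Proof.
  intros H1 H2 H3. destruct hP as (_&_&_&_&_&_&Q&_).
  assert (H4 : al y = al (pop P x y z H1 H2)) by (rewrite opE, op_al; auto).
  assert (H5 : be x = be v) by congruence.
  pose proof (Q x y z v H1 H2 H3 H4 H5 H2) as E. rewrite !opE in E. exact E.
Qed.
Lemma op_P5 x y z w : be x = be y -> al x = al z -> al z = al w ->
  opT z (opT x y z) w = opT x y w.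
Proof.
  intros H1 H2 H4. destruct hP as (_&_&_&_&_&_&_&Q).
  assert (H3 : be z = be (pop P x y z H1 H2)) by (rewrite opE, op_be; auto).
  assert (H6 : al x = al w) by congruence.
  pose proof (Q x y z w H1 H2 H3 H4 H1 H6) as E. rewrite !opE in E. exact E.
Qed.
Lemma op_P6 x y z u w : be u = be z -> al u = al w -> be x = be y -> al x = al z ->
  opT u (opT x y z) w = opT x y (opT u z w).
Proof.
  intros H1 H2 H3 H4.
  assert (E1 : al z = al (opT u z w)) by (rewrite op_al; auto).
  rewrite <- (op_P5 x y z (opT u z w)); auto.
  rewrite op_P4; auto. rewrite op_be; auto.
Qed.
End PG.

Section GPD.
Variable A : Type.
Variable G : GpdData A.
Hypothesis hG : gpd_ax G.
Definition gcT (f g : arr G) : arr G := dflt (fun H : d1 f = d0 g => gcomp f g H) f.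
Lemma gcE f g H : gcomp f g H = gcT f g.
Proof. unfold gcT. rewrite (dflt_eq _ _ H). reflexivity. Qed.
Lemma gc_d0 f g : d1 f = d0 g -> d0 (gcT f g) = d0 f.
Proof. intro H. rewrite <- (gcE f g H). destruct hG as (_&_&Q&_). apply Q. Qed.
Lemma gc_d1 f g : d1 f = d0 g -> d1 (gcT f g) = d1 g.
Proof. intro H. rewrite <- (gcE f g H). destruct hG as (_&_&Q&_). apply Q. Qed.
Lemma idn_d0 a : d0 (idn G a) = a.
Proof. destruct hG as (_&Q&_). apply Q. Qed.
Lemma idn_d1 a : d1 (idn G a) = a.
Proof. destruct hG as (_&Q&_). apply Q. Qed.
End GPD.
Arguments gcT {A} G f g.

Section LTOR.
Variable T : LTors.
Local Notation al := (lt_al T).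
Local Notation be := (lt_be T).
Local Notation G := (lt_G T).
Definition lactT (g : arr G) (x : lt_X T) : lt_X T :=
  dflt (fun H : al x = d1 g => lt_act T g x H) x.
Lemma lactE g x H : lt_act T g x H = lactT g x.
Proof. unfold lactT. rewrite (dflt_eq _ _ H). reflexivity. Qed.
Lemma lt_gpd : gpd_ax G.
Proof. destruct (ltax T) as (Q&_). exact Q. Qed.
Lemma lact_al g x : al x = d1 g -> al (lactT g x) = d0 g.
Proof. intro H. rewrite <- (lactE g x H). destruct (ltax T) as (_&(Q&_)&_). apply Q. Qed.
Lemma lact_id x : lactT (idn G (al x)) x = x.
Proof.
  assert (H : al x = d1 (idn G (al x))) by (rewrite idn_d1; auto; apply lt_gpd).
  rewrite <- (lactE _ x H). destruct (ltax T) as (_&(_&Q&_)&_). apply Q.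
Qed.
Lemma lact_id' a x : al x = a -> lactT (idn G a) x = x.
Proof. intros <-. apply lact_id. Qed.
Lemma lact_comp g h x : al x = d1 h -> d1 g = d0 h ->
  lactT g (lactT h x) = lactT (gcT G g h) x.
Proof.
  intros H1 H3. destruct (ltax T) as (hG&(_&_&Q)&_).
  assert (H2 : al (lt_act T h x H1) = d1 g) by (rewrite lactE, lact_al; auto).
  assert (H4 : al x = d1 (gcomp g h H3)) by (rewrite gcE, gc_d1; auto).
  pose proof (Q g h x H1 H2 H3 H4) as E. rewrite !lactE, gcE in E. exact E.
Qed.
Lemma lact_free g g' x : al x = d1 g -> al x = d1 g' -> lactT g x = lactT g' x -> g = g'.
Proof.
  intros H H' E. rewrite <- (lactE g x H), <- (lactE g' x H') in E.
  destruct (ltax T) as (_&_&_&_&Q&_). exact (Q _ _ _ _ _ E).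
Qed.
Lemma lt_orb x y : be x = be y <-> exists g, al x = d1 g /\ lactT g x = y.
Proof.
  destruct (ltax T) as (_&_&_&_&_&_&Q). rewrite Q. split.
  - intros (g&H&E). exists g. split; auto. rewrite <- (lactE _ _ H). auto.
  - intros (g&H&E). exists g, H. rewrite lactE. auto.
Qed.
Lemma lact_be g x : al x = d1 g -> be (lactT g x) = be x.
Proof. intro H. symmetry. apply lt_orb. eauto. Qed.
Lemma lt_surj_al : surj al.
Proof. destruct (ltax T) as (_&_&_&Q&_). exact Q. Qed.
Lemma lt_surj_be : surj be.
Proof. destruct (ltax T) as (_&_&_&_&_&Q&_). exact Q. Qed.
Lemma lt_inh : inhabited (lt_X T).
Proof. destruct (ltax T) as (_&_&Q&_). exact Q. Qed.

Lemma cl_specT x y z g : al x = d1 g -> lactT g x = y -> al x = al z ->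
  opT (cl_data T) x y z = lactT g z.
Proof.
  intros Hg Ey Hz.
  assert (H1 : be x = be y) by (apply lt_orb; eauto).
  rewrite <- (opE (cl_data T) x y z H1 Hz). simpl. unfold cl_op.
  rewrite lactE. destruct (cl_arrow T x y H1) as [g0 [H0 E0]]. simpl.
  rewrite lactE in E0. f_equal. apply (lact_free _ _ x); auto. congruence.
Qed.

Lemma hcl : pregpd_ax (cl_data T).
Proof.
  pose proof lt_gpd as hG.
  assert (OP : forall x y z (H1 : be x = be y) (H2 : al x = al z),
    exists g, al x = d1 g /\ lactT g x = y /\ pop (cl_data T) x y z H1 H2 = lactT g z).
  { intros. destruct (proj1 (lt_orb x y) H1) as (g&Hg&Eg). exists g. repeat split; auto.
    rewrite opE. apply cl_specT; auto. }
  split; [exact lt_inh|]. split; [exact lt_surj_al|]. split; [exact lt_surj_be|].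
  split; [|split; [|split; [|split]]].
  - intros x y z H1 H2. destruct (OP x y z H1 H2) as (g&Hg&Eg&->). simpl.
    simpl in H1, H2. rewrite lact_be, lact_al by congruence. rewrite <- Eg, lact_al; auto.
  - intros x z H1 H2. rewrite opE. simpl.
    rewrite (cl_specT x x z (idn G (al x))); auto.
    + apply lact_id'; auto.
    + rewrite idn_d1; auto.
    + apply lact_id.
  - intros x y H1 H2. rewrite opE. destruct (proj1 (lt_orb x y) H1) as (g&Hg&Eg).
    rewrite (cl_specT x y x g); auto.
  - intros x y z v H1 H2 H3 H4 H5 H6. rewrite !opE. cbn in *.
    destruct (proj1 (lt_orb x y) H1) as (g&Hg&Eg).
    destruct (proj1 (lt_orb y v) H3) as (h&Hh&Eh).
    rewrite (cl_specT x y z g); auto.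
    assert (Hy : al y = d0 g) by (rewrite <- Eg, lact_al; auto).
    rewrite (cl_specT y v (lactT g z) h); auto.
    + rewrite (cl_specT x v z (gcT G h g)); auto.
      * apply lact_comp; congruence.
      * rewrite gc_d1; congruence.
      * rewrite <- lact_comp; try congruence.
    + rewrite lact_al; congruence.
  - intros x y z w H1 H2 H3 H4 H5 H6. rewrite !opE. cbn in *.
    destruct (proj1 (lt_orb x y) H1) as (g&Hg&Eg).
    rewrite (cl_specT x y z g); auto.
    rewrite (cl_specT z (lactT g z) w g); auto; try congruence.
    rewrite (cl_specT x y w g); auto.
Qed.
End LTOR.

Lemma lthom_act {T T' : LTors} (f : LTHom T T') g x : lt_al T x = d1 g ->
  lh_X f (lactT T g x) = lactT T' (lh_G f g) (lh_X f x).
Proof.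
  intro H. destruct (lthax f) as ((F1&_)&F2&_&F4).
  assert (H' : lt_al T' (lh_X f x) = d1 (lh_G f g)) by (rewrite F2, H; symmetry; apply F1).
  rewrite <- (lactE T g x H), <- (lactE T' _ _ H'). apply F4.
Qed.

Lemma hclm (T T' : LTors) (f : LTHom T T') : phom_ax (cl_hom_data f).
Proof.
  destruct (lthax f) as ((F1&_)&F2&F3&F4).
  split; [exact F2|]. split; [exact F3|].
  intros x y z H1 H2 H1' H2'. rewrite !opE. simpl in *.
  destruct (proj1 (lt_orb T x y) H1) as (g&Hg&Eg).
  rewrite (cl_specT T x y z g); auto.
  rewrite lthom_act by congruence.
  symmetry. apply cl_specT; auto.
  - rewrite F2, Hg. symmetry. apply F1.
  - rewrite <- lthom_act; auto. congruence.
Qed.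

Section RTOR.
Variable T : RTors.
Local Notation al := (rt_al T).
Local Notation be := (rt_be T).
Local Notation H := (rt_H T).
Definition ractT (x : rt_X T) (h : arr H) : rt_X T :=
  dflt (fun E : be x = d0 h => rt_act T x h E) x.
Lemma ractE x h E : rt_act T x h E = ractT x h.
Proof. unfold ractT. rewrite (dflt_eq _ _ E). reflexivity. Qed.
Lemma rt_gpd : gpd_ax H.
Proof. destruct (rtax T) as (Q&_). exact Q. Qed.
Lemma ract_be x h : be x = d0 h -> be (ractT x h) = d1 h.
Proof. intro E. rewrite <- (ractE x h E). destruct (rtax T) as (_&(Q&_)&_). apply Q. Qed.
Lemma ract_id x : ractT x (idn H (be x)) = x.
Proof.
  assert (E : be x = d0 (idn H (be x))) by (rewrite idn_d0; auto; apply rt_gpd).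
  rewrite <- (ractE x _ E). destruct (rtax T) as (_&(_&Q&_)&_). apply Q.
Qed.
Lemma ract_id' b x : be x = b -> ractT x (idn H b) = x.
Proof. intros <-. apply ract_id. Qed.
Lemma ract_comp x h k : be x = d0 h -> d1 h = d0 k ->
  ractT (ractT x h) k = ractT x (gcT H h k).
Proof.
  intros H1 H3. destruct (rtax T) as (hG&(_&_&Q)&_).
  assert (H2 : be (rt_act T x h H1) = d0 k) by (rewrite ractE, ract_be; auto).
  assert (H4 : be x = d0 (gcomp h k H3)) by (rewrite gcE, gc_d0; auto).
  pose proof (Q x h k H1 H2 H3 H4) as E. rewrite !ractE, gcE in E. exact E.
Qed.
Lemma ract_free h h' x : be x = d0 h -> be x = d0 h' -> ractT x h = ractT x h' -> h = h'.
Proof.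
  intros E1 E2 E. rewrite <- (ractE x h E1), <- (ractE x h' E2) in E.
  destruct (rtax T) as (_&_&_&_&Q&_). exact (Q _ _ _ _ _ E).
Qed.
Lemma rt_orb x y : al x = al y <-> exists h, be x = d0 h /\ ractT x h = y.
Proof.
  destruct (rtax T) as (_&_&_&_&_&_&Q). rewrite Q. split.
  - intros (h&E&E'). exists h. split; auto. rewrite <- (ractE _ _ E). auto.
  - intros (h&E&E'). exists h, E. rewrite ractE. auto.
Qed.
Lemma ract_al x h : be x = d0 h -> al (ractT x h) = al x.
Proof. intro E. symmetry. apply rt_orb. eauto. Qed.
Lemma rt_surj_al : surj al.
Proof. destruct (rtax T) as (_&_&_&_&_&Q&_). exact Q. Qed.
Lemma rt_surj_be : surj be.
Proof. destruct (rtax T) as (_&_&_&Q&_). exact Q. Qed.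
Lemma rt_inh : inhabited (rt_X T).
Proof. destruct (rtax T) as (_&_&Q&_). exact Q. Qed.

Lemma cr_specT x y z h : be x = d0 h -> ractT x h = z -> be x = be y ->
  opT (cr_data T) x y z = ractT y h.
Proof.
  intros Hh Ez Hy.
  assert (H2 : al x = al z) by (apply rt_orb; eauto).
  rewrite <- (opE (cr_data T) x y z Hy H2). simpl. unfold cr_op.
  rewrite ractE. destruct (cr_arrow T x z H2) as [h0 [H0 E0]]. simpl.
  rewrite ractE in E0. f_equal. apply (ract_free _ _ x); auto. congruence.
Qed.

Lemma hcr : pregpd_ax (cr_data T).
Proof.
  pose proof rt_gpd as hG.
  split; [exact rt_inh|]. split; [exact rt_surj_al|]. split; [exact rt_surj_be|].
  split; [|split; [|split; [|split]]].
  - intros x y z H1 H2. rewrite opE. cbn in *.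
    destruct (proj1 (rt_orb x z) H2) as (h&Hh&Eh).
    rewrite (cr_specT x y z h); auto.
    rewrite ract_al, ract_be by congruence. rewrite <- Eh, ract_be; auto.
  - intros x z H1 H2. rewrite opE. cbn in *.
    destruct (proj1 (rt_orb x z) H2) as (h&Hh&Eh).
    rewrite (cr_specT x x z h); auto.
  - intros x y H1 H2. rewrite opE. cbn in *.
    rewrite (cr_specT x y x (idn H (be x))); auto.
    + apply ract_id'; auto.
    + rewrite idn_d0; auto.
    + apply ract_id.
  - intros x y z v H1 H2 H3 H4 H5 H6. rewrite !opE. cbn in *.
    destruct (proj1 (rt_orb x z) H2) as (h&Hh&Eh).
    rewrite (cr_specT x y z h); auto.
    rewrite (cr_specT y v (ractT y h) h); auto; try congruence.
    rewrite (cr_specT x v z h); auto; congruence.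
  - intros x y z w H1 H2 H3 H4 H5 H6. rewrite !opE. cbn in *.
    destruct (proj1 (rt_orb x z) H2) as (h&Hh&Eh).
    destruct (proj1 (rt_orb z w) H4) as (k&Hk&Ek).
    assert (Hz : be z = d1 h) by (rewrite <- Eh, ract_be; auto).
    rewrite (cr_specT x y z h); auto.
    rewrite (cr_specT z (ractT y h) w k); auto.
    + rewrite ract_comp by congruence.
      rewrite (cr_specT x y w (gcT H h k)); auto.
      * rewrite gc_d0; congruence.
      * rewrite <- ract_comp; congruence.
    + rewrite ract_be; congruence.
Qed.
End RTOR.

Lemma rthom_act {T T' : RTors} (f : RTHom T T') x h : rt_be T x = d0 h ->
  rh_X f (ractT T x h) = ractT T' (rh_X f x) (rh_H f h).
Proof.
  intro E. destruct (rthax f) as ((F1&_)&F2&F3&F4).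
  assert (E' : rt_be T' (rh_X f x) = d0 (rh_H f h)) by (rewrite F3, E; symmetry; apply F1).
  rewrite <- (ractE T x h E), <- (ractE T' _ _ E'). apply F4.
Qed.

Lemma hcrm (T T' : RTors) (f : RTHom T T') : phom_ax (cr_hom_data f).
Proof.
  destruct (rthax f) as ((F1&_)&F2&F3&F4).
  split; [exact F2|]. split; [exact F3|].
  intros x y z H1 H2 H1' H2'. rewrite !opE. simpl in *.
  destruct (proj1 (rt_orb T x z) H2) as (h&Hh&Eh).
  rewrite (cr_specT T x y z h); auto.
  rewrite rthom_act by congruence.
  symmetry. apply cr_specT; auto.
  - rewrite F3, Hh. symmetry. apply F1.
  - rewrite <- rthom_act; auto. congruence.
Qed.

#[global] Hint Resolve pax : core.

Section Quot.
Variable T : Type.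
Variable R : T -> T -> Prop.
Hypothesis Rrefl : forall t, R t t.
Hypothesis Rsym : forall t u, R t u -> R u t.
Hypothesis Rtrans : forall t u v, R t u -> R u v -> R t v.
Lemma qcls_eq t u : R t u -> @qcls T R t = qcls u.
Proof.
  intro H. unfold qcls. apply sig_eq.
  apply functional_extensionality. intro v. apply propositional_extensionality.
  split; intro K; eauto.
Qed.
Lemma qcls_inv t u : @qcls T R t = qcls u -> R t u.
Proof.
  intro E. apply (f_equal (@proj1_sig _ _)) in E. simpl in E.
  rewrite E. apply Rrefl.
Qed.
Lemma qcls_qrep (c : quot R) : qcls (qrep c) = c.
Proof.
  destruct c as [S HS]. unfold qrep. simpl.
  destruct (constructive_indefinite_description _ HS) as [t Ht]. simpl.
  unfold qcls. apply sig_eq. symmetry. exact Ht.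
Qed.
End Quot.

Section EnvL.
Variable P : Pregpd.
Local Notation al := (pal P).
Local Notation be := (pbe P).
Local Notation op := (opT (pd P)).
Local Notation hP := (pax P).

Lemma pick_al_spec a : al (pick_al P a) = a.
Proof. unfold pick_al. destruct (constructive_indefinite_description _ _) as [x Hx]. exact Hx. Qed.
Lemma pick_be_spec b : be (pick_be P b) = b.
Proof. unfold pick_be. destruct (constructive_indefinite_description _ _) as [x Hx]. exact Hx. Qed.

Lemma RR_iff (p q : TR P) : RR P p q <->
  al (fst (proj1_sig p)) = al (fst (proj1_sig q)) /\
  snd (proj1_sig q) = op (fst (proj1_sig p)) (snd (proj1_sig p)) (fst (proj1_sig q)).
Proof.
  unfold RR. split.
  - intros [H E]. split; auto. rewrite E, opE. reflexivity.
  - intros [H E]. exists H. rewrite E, opE. reflexivity.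
Qed.
Lemma RR_refl p : RR P p p.
Proof. apply RR_iff. destruct p as [[x y] H]; simpl in *. split; auto. rewrite op_xyx; auto. Qed.
Lemma RR_sym p q : RR P p q -> RR P q p.
Proof.
  rewrite !RR_iff. destruct p as [[x y] H], q as [[x' y'] H']; simpl in *.
  intros [E1 E2]. split; auto. subst y'. rewrite op_P5; auto. rewrite op_xyx; auto.
Qed.
Lemma RR_trans p q r : RR P p q -> RR P q r -> RR P p r.
Proof.
  rewrite !RR_iff. destruct p as [[x y] H], q as [[x' y'] H'], r as [[x'' y''] H'']; simpl in *.
  intros [E1 E2] [E3 E4]. split; [congruence|]. subst. rewrite op_P5; auto.
Qed.

Notation clsR x y H := (@qcls (TR P) (RR P) (exist _ (x, y) H)).

Lemma clsR_eq x y x' y' (H : be x = be y) (H' : be x' = be y') :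
  al x = al x' -> y' = op x y x' -> clsR x y H = clsR x' y' H'.
Proof.
  intros E1 E2. apply qcls_eq; [exact RR_sym|exact RR_trans|]. apply RR_iff. simpl. auto.
Qed.
Lemma clsR_inv x y x' y' (H : be x = be y) (H' : be x' = be y') :
  clsR x y H = clsR x' y' H' -> al x = al x' /\ y' = op x y x'.
Proof. intro E. apply qcls_inv in E; [|exact RR_refl]. apply RR_iff in E. exact E. Qed.
Lemma cR_rep (c : XXinv P) : c = clsR (rx P c) (ry P c) (rxy P c).
Proof.
  unfold rx, ry, rxy. rewrite <- (qcls_qrep _ _ c) at 1.
  destruct (qrep c) as [[a b] pf]. reflexivity.
Qed.
Lemma cR_ind (Q : XXinv P -> Prop) : (forall x y H, Q (clsR x y H)) -> forall c, Q c.
Proof. intros K c. rewrite (cR_rep c). apply K. Qed.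
Lemma rx_cls x y H : al (rx P (clsR x y H)) = al x /\
   ry P (clsR x y H) = op x y (rx P (clsR x y H)).
Proof.
  pose proof (cR_rep (clsR x y H)) as E.
  apply clsR_inv in E. destruct E; split; auto.
Qed.
Lemma clsR_pi x y H H' : clsR x y H = clsR x y H'.
Proof. f_equal. f_equal. apply proof_irrelevance. Qed.

Lemma d0L x y H : @d0 _ (GL P) (clsR x y H) = al y.
Proof. simpl. destruct (rx_cls x y H) as [E1 E2]. rewrite E2, op_al; auto. Qed.
Lemma d1L x y H : @d1 _ (GL P) (clsR x y H) = al x.
Proof. simpl. destruct (rx_cls x y H) as [E1 E2]. auto. Qed.
Lemma lactL_cls x y H z Hz : lactL P (clsR x y H) z Hz = op x y z.
Proof.
  unfold lactL. rewrite opE. destruct (rx_cls x y H) as [E1 E2].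
  simpl in Hz. rewrite E2. rewrite op_P5; auto; congruence.
Qed.
Lemma idnL a p : al p = a -> idn (GL P) a = clsR p p eq_refl.
Proof.
  intro E. simpl. apply clsR_eq.
  - rewrite pick_al_spec; auto.
  - rewrite op_xxz; auto. rewrite pick_al_spec; auto.
Qed.
Lemma gcompL x1 y1 H1 x2 y2 H2 H H' :
  GLcomp P (clsR x1 y1 H1) (clsR x2 y2 H2) H = clsR x2 (op x1 y1 y2) H'.
Proof.
  unfold GLcomp. symmetry.
  destruct (rx_cls x1 y1 H1) as [E1 E2]. destruct (rx_cls x2 y2 H2) as [E3 E4].
  apply clsR_eq; simpl; auto. rewrite opE.
  simpl in H. revert H. rewrite E2, E4.
  set (r1 := rx P (clsR x1 y1 H1)) in *. set (r2 := rx P (clsR x2 y2 H2)) in *.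
  clearbody r1 r2. intro H.
  assert (Hal : al x1 = al y2) by (rewrite <- E1, H, op_al; auto).
  rewrite op_P5; auto; try congruence.
  rewrite op_P6; auto; congruence.
Qed.
End EnvL.

Section EnvL2.
Variable P : Pregpd.
Local Notation al := (pal P).
Local Notation be := (pbe P).
Local Notation op := (opT (pd P)).
Notation clsR x y H := (@qcls (TR P) (RR P) (exist _ (x, y) H)).

Ltac peq := cbn in *; first [exact (pax _) | congruence | rewrite op_be; peq | rewrite op_al; peq].

Lemma clsR_eq' x y y' H H' : y = y' -> clsR x y H = clsR x y' H'.
Proof. intros ->. apply clsR_pi. Qed.

Lemma gcompG c1 c2 H x1 y1 H1 x2 y2 H2 H' :
  c1 = clsR x1 y1 H1 -> c2 = clsR x2 y2 H2 ->
  @gcomp _ (GL P) c1 c2 H = clsR x2 (op x1 y1 y2) H'.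
Proof. intros -> ->. apply gcompL. Qed.

Lemma GL_gpd : gpd_ax (GL P).
Proof.
  unfold gpd_ax.
  split. { destruct (pax P) as ([x]&_). constructor. exact (al x). }
  split. { intro a. rewrite (idnL P a (pick_al P a) (pick_al_spec P a)).
           rewrite d0L, d1L, pick_al_spec. auto. }
  split.
  { intros f g. induction f as [x y H0] using cR_ind. induction g as [x0 y0 H1] using cR_ind. intro H.
    pose proof H as K. rewrite d1L, d0L in K.
    assert (H' : be x0 = be (op x y y0)) by peq.
    rewrite (gcompG _ _ H x y H0 x0 y0 H1 H' eq_refl eq_refl).
    rewrite !d0L, !d1L. split; peq. }
  split.
  { intro f. induction f as [x y H0] using cR_ind. intro H.
    assert (Hq : be x = be (op y y y)) by peq.
    rewrite (gcompG _ _ H y y eq_refl x y H0 Hq); [| |reflexivity].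
    - apply clsR_eq'. apply op_xxz; auto.
    - rewrite d0L. apply idnL; auto. }
  split.
  { intro f. induction f as [x y H0] using cR_ind. intro H.
    assert (Hq : be x = be (op x y x)) by peq.
    rewrite (gcompG _ _ H x y H0 x x eq_refl Hq); [|reflexivity|].
    - apply clsR_eq'. apply op_xyx; auto.
    - rewrite d1L. apply idnL; auto. }
  split.
  { intros f g h. induction f as [x y H0] using cR_ind. induction g as [x0 y0 H1] using cR_ind. induction h as [x1 y1 H2] using cR_ind.
    intros Q1 Q2 Q3 Q4.
    pose proof Q1 as K1. rewrite d1L, d0L in K1.
    pose proof Q3 as K3. rewrite d1L, d0L in K3.
    assert (E1 : be x0 = be (op x y y0)) by peq.
    assert (E2 : be x1 = be (op x0 y0 y1)) by peq.
    assert (E3 : be x1 = be (op x0 (op x y y0) y1)) by peq.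
    assert (E4 : be x1 = be (op x y (op x0 y0 y1))) by peq.
    rewrite (gcompG _ _ Q2 (x0) (op x y y0) E1 x1 y1 H2 E3).
    2: { apply gcompL. }
    2: reflexivity.
    rewrite (gcompG _ _ Q4 x y H0 x1 (op x0 y0 y1) E2 E4); auto.
    2: { apply gcompL. }
    apply clsR_eq'. apply op_P6; peq. }
  { intro f. induction f as [x y H] using cR_ind.
    exists (clsR y x (eq_sym H)).
    assert (Q1 : @d1 _ (GL P) (clsR x y H) = @d0 _ (GL P) (clsR y x (eq_sym H)))
      by (rewrite d1L, d0L; auto).
    assert (Q2 : @d1 _ (GL P) (clsR y x (eq_sym H)) = @d0 _ (GL P) (clsR x y H))
      by (rewrite d1L, d0L; auto).
    exists Q1, Q2. split.
    - assert (Hq : be y = be (op x y x)) by peq.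
      rewrite (gcompG _ _ Q1 x y H y x (eq_sym H) Hq); auto.
      rewrite d0L. symmetry. rewrite (idnL P (al y) y); auto.
      apply clsR_eq'. symmetry. apply op_xyx; auto.
    - assert (Hq : be x = be (op y x y)) by peq.
      rewrite (gcompG _ _ Q2 y x (eq_sym H) x y H Hq); auto.
      rewrite d1L. symmetry. rewrite (idnL P (al x) x); auto.
      apply clsR_eq'. symmetry. apply op_xyx; auto. }
Qed.
End EnvL2.

Section EnvL3.
Variable P : Pregpd.
Local Notation al := (pal P).
Local Notation be := (pbe P).
Local Notation op := (opT (pd P)).
Notation clsR x y H := (@qcls (TR P) (RR P) (exist _ (x, y) H)).
Ltac peq := cbn in *; first [exact (pax _) | congruence | rewrite op_be; peq | rewrite op_al; peq].

Lemma lactG c x y H z Hz : c = clsR x y H -> lactL P c z Hz = op x y z.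
Proof. intros ->. apply lactL_cls. Qed.

Lemma env_left : ltors_ax (bt_left (env_data P)).
Proof.
  change (ltors_ax (Build_LTData (pA P) (pB P) (pX P) (pal P) (pbe P) (GL P) (lactL P))).
  unfold ltors_ax. cbn [lt_A lt_B lt_X lt_al lt_be lt_G lt_act].
  split; [apply GL_gpd|].
  split.
  { split; [|split].
    - intros g. induction g as [x y H0] using cR_ind. intros z Hz.
      rewrite lactL_cls, d0L. pose proof Hz as K. rewrite d1L in K. peq.
    - intros x Hx. rewrite (lactG _ x x eq_refl); [apply op_xxz; auto|].
      apply idnL; auto.
    - intros g h. induction g as [x1 y1 K1] using cR_ind. induction h as [x2 y2 K2] using cR_ind.
      intros z Q1 Q2 Q3 Q4.
      pose proof Q1 as E1. rewrite d1L in E1. pose proof Q3 as E3. rewrite d1L, d0L in E3.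
      rewrite lactL_cls. rewrite lactL_cls.
      assert (Hq : be x2 = be (op x1 y1 y2)) by peq.
      rewrite (lactG _ x2 (op x1 y1 y2) Hq).
      + symmetry. apply op_P6; peq.
      + apply gcompL. }
  split; [destruct (pax P) as (Q&_); exact Q|].
  split; [destruct (pax P) as (_&Q&_); exact Q|].
  split.
  { intros g g'. induction g as [x1 y1 K1] using cR_ind. induction g' as [x2 y2 K2] using cR_ind.
    intros z Q Q' E. rewrite !lactL_cls in E.
    pose proof Q as E1. rewrite d1L in E1. pose proof Q' as E2. rewrite d1L in E2.
    assert (Hq : be z = be (op x1 y1 z)) by peq.
    transitivity (clsR z (op x1 y1 z) Hq).
    - apply clsR_eq; peq.
    - symmetry. apply clsR_eq; [peq|exact E]. }
  split; [destruct (pax P) as (_&_&Q&_); exact Q|].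
  { intros x y. split.
    - intro E. assert (Q : al x = @d1 _ (GL P) (clsR x y E)) by (rewrite d1L; auto).
      exists (clsR x y E), Q. rewrite lactL_cls. apply op_xyx; auto.
    - intros (g&Q&E). revert Q E. induction g as [x1 y1 K1] using cR_ind. intros Q E.
      rewrite lactL_cls in E. pose proof Q as E1. rewrite d1L in E1. subst y. peq. }
Qed.
End EnvL3.

Section EnvR.
Variable P : Pregpd.
Local Notation al := (pal P).
Local Notation be := (pbe P).
Local Notation op := (opT (pd P)).
Ltac peq := cbn in *; first [exact (pax _) | congruence | rewrite op_be; peq | rewrite op_al; peq].

Lemma RL_iff (p q : TL P) : RL P p q <->
  be (fst (proj1_sig p)) = be (fst (proj1_sig q)) /\
  snd (proj1_sig q) = op (fst (proj1_sig p)) (fst (proj1_sig q)) (snd (proj1_sig p)).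
Proof.
  unfold RL. split.
  - intros [H E]. split; auto. rewrite E, opE. reflexivity.
  - intros [H E]. exists H. rewrite E, opE. reflexivity.
Qed.
Lemma RL_refl p : RL P p p.
Proof. apply RL_iff. destruct p as [[x y] H]; simpl in *. split; auto. rewrite op_xxz; auto. Qed.
Lemma RL_sym p q : RL P p q -> RL P q p.
Proof.
  rewrite !RL_iff. destruct p as [[x y] H], q as [[x' y'] H']; simpl in *.
  intros [E1 E2]. split; auto. subst y'. rewrite op_P4; auto. rewrite op_xxz; auto.
Qed.
Lemma RL_trans p q r : RL P p q -> RL P q r -> RL P p r.
Proof.
  rewrite !RL_iff. destruct p as [[x y] H], q as [[x' y'] H'], r as [[x'' y''] H'']; simpl in *.
  intros [E1 E2] [E3 E4]. split; [congruence|]. subst. rewrite op_P4; auto.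
Qed.

Notation clsL x z H := (@qcls (TL P) (RL P) (exist _ (x, z) H)).

Lemma clsL_eq x z x' z' (H : al x = al z) (H' : al x' = al z') :
  be x = be x' -> z' = op x x' z -> clsL x z H = clsL x' z' H'.
Proof.
  intros E1 E2. apply qcls_eq; [exact RL_sym|exact RL_trans|]. apply RL_iff. simpl. auto.
Qed.
Lemma clsL_inv x z x' z' (H : al x = al z) (H' : al x' = al z') :
  clsL x z H = clsL x' z' H' -> be x = be x' /\ z' = op x x' z.
Proof. intro E. apply qcls_inv in E; [|exact RL_refl]. apply RL_iff in E. exact E. Qed.
Lemma cL_rep (c : XinvX P) : c = clsL (lx P c) (lz P c) (lxz P c).
Proof.
  unfold lx, lz, lxz. rewrite <- (qcls_qrep _ _ c) at 1.
  destruct (qrep c) as [[a b] pf]. reflexivity.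
Qed.
Lemma cL_ind (Q : XinvX P -> Prop) : (forall x z H, Q (clsL x z H)) -> forall c, Q c.
Proof. intros K c. rewrite (cL_rep c). apply K. Qed.
Lemma lx_cls x z H : be (lx P (clsL x z H)) = be x /\
   lz P (clsL x z H) = op x (lx P (clsL x z H)) z.
Proof.
  pose proof (cL_rep (clsL x z H)) as E.
  apply clsL_inv in E. destruct E; split; auto.
Qed.
Lemma clsL_pi x z H H' : clsL x z H = clsL x z H'.
Proof. f_equal. f_equal. apply proof_irrelevance. Qed.
Lemma clsL_eq' x z z' H H' : z = z' -> clsL x z H = clsL x z' H'.
Proof. intros ->. apply clsL_pi. Qed.

Lemma d0R x z H : @d0 _ (GR P) (clsL x z H) = be x.
Proof. simpl. destruct (lx_cls x z H) as [E1 E2]. auto. Qed.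
Lemma d1R x z H : @d1 _ (GR P) (clsL x z H) = be z.
Proof. simpl. destruct (lx_cls x z H) as [E1 E2]. rewrite E2, op_be; auto. Qed.
Lemma ractR_cls x z H w Hw : ractR P w (clsL x z H) Hw = op x w z.
Proof.
  unfold ractR. rewrite opE. destruct (lx_cls x z H) as [E1 E2].
  simpl in Hw. rewrite E2. rewrite op_P4; auto; congruence.
Qed.
Lemma ractG c x z H w Hw : c = clsL x z H -> ractR P w c Hw = op x w z.
Proof. intros ->. apply ractR_cls. Qed.
Lemma idnR b p : be p = b -> idn (GR P) b = clsL p p eq_refl.
Proof.
  intro E. simpl. apply clsL_eq.
  - rewrite pick_be_spec; auto.
  - rewrite op_xyx; auto. rewrite pick_be_spec; auto.
Qed.
Lemma gcompR x1 z1 H1 x2 z2 H2 H H' :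
  GRcomp P (clsL x1 z1 H1) (clsL x2 z2 H2) H = clsL x1 (op x2 z1 z2) H'.
Proof.
  unfold GRcomp. symmetry.
  destruct (lx_cls x1 z1 H1) as [E1 E2]. destruct (lx_cls x2 z2 H2) as [E3 E4].
  apply clsL_eq; [simpl; congruence|]. simpl. rewrite opE.
  simpl in H. revert H. rewrite E2, E4.
  set (r1 := lx P (clsL x1 z1 H1)) in *. set (r2 := lx P (clsL x2 z2 H2)) in *.
  clearbody r1 r2. intro H.
  assert (Hbe : be z1 = be x2) by (rewrite <- E3, <- H, op_be; auto).
  rewrite op_P6; auto; try congruence.
  - rewrite op_P4; auto; congruence.
  - rewrite op_al; auto; congruence.
Qed.
Lemma gcompRG c1 c2 H x1 z1 H1 x2 z2 H2 H' :
  c1 = clsL x1 z1 H1 -> c2 = clsL x2 z2 H2 ->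
  @gcomp _ (GR P) c1 c2 H = clsL x1 (op x2 z1 z2) H'.
Proof. intros -> ->. apply gcompR. Qed.

Lemma GR_gpd : gpd_ax (GR P).
Proof.
  unfold gpd_ax.
  split. { destruct (pax P) as ([x]&_). constructor. exact (be x). }
  split. { intro b. rewrite (idnR b (pick_be P b) (pick_be_spec P b)).
           rewrite d0R, d1R, pick_be_spec. auto. }
  split.
  { intros f g. induction f as [x z H0] using cL_ind. induction g as [x0 z0 H1] using cL_ind. intro H.
    pose proof H as K. rewrite d1R, d0R in K.
    assert (H' : al x = al (op x0 z z0)) by peq.
    rewrite (gcompRG _ _ H x z H0 x0 z0 H1 H' eq_refl eq_refl).
    rewrite !d0R, !d1R. split; peq. }
  split.
  { intro f. induction f as [x z H0] using cL_ind. intro H.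
    assert (Hq : al x = al (op x x z)) by peq.
    rewrite (gcompRG _ _ H x x eq_refl x z H0 Hq); [| |reflexivity].
    - apply clsL_eq'. apply op_xxz; auto.
    - rewrite d0R. apply idnR; auto. }
  split.
  { intro f. induction f as [x z H0] using cL_ind. intro H.
    assert (Hq : al x = al (op z z z)) by peq.
    rewrite (gcompRG _ _ H x z H0 z z eq_refl Hq); [|reflexivity|].
    - apply clsL_eq'. apply op_xxz; auto.
    - rewrite d1R. apply idnR; auto. }
  split.
  { intros f g h. induction f as [x1 z1 H1] using cL_ind. induction g as [x2 z2 H2] using cL_ind.
    induction h as [x3 z3 H3] using cL_ind.
    intros Q1 Q2 Q3 Q4.
    pose proof Q1 as K1. rewrite d1R, d0R in K1.
    pose proof Q3 as K3. rewrite d1R, d0R in K3.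
    assert (E1 : al x1 = al (op x2 z1 z2)) by peq.
    assert (E2 : al x2 = al (op x3 z2 z3)) by peq.
    assert (E3 : al x1 = al (op x3 (op x2 z1 z2) z3)) by peq.
    assert (E4 : al x1 = al (op x2 z1 (op x3 z2 z3))) by peq.
    rewrite (gcompRG _ _ Q2 x1 (op x2 z1 z2) E1 x3 z3 H3 E3); [| apply gcompR | reflexivity].
    rewrite (gcompRG _ _ Q4 x1 z1 H1 x2 (op x3 z2 z3) E2 E4); [| reflexivity | apply gcompR].
    apply clsL_eq'. apply op_P6; peq. }
  { intro f. induction f as [x z H] using cL_ind.
    exists (clsL z x (eq_sym H)).
    assert (Q1 : @d1 _ (GR P) (clsL x z H) = @d0 _ (GR P) (clsL z x (eq_sym H)))
      by (rewrite d1R, d0R; auto).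
    assert (Q2 : @d1 _ (GR P) (clsL z x (eq_sym H)) = @d0 _ (GR P) (clsL x z H))
      by (rewrite d1R, d0R; auto).
    exists Q1, Q2. split.
    - assert (Hq : al x = al (op z z x)) by peq.
      rewrite (gcompRG _ _ Q1 x z H z x (eq_sym H) Hq); auto.
      rewrite d0R. symmetry. rewrite (idnR (be x) x); auto.
      apply clsL_eq'. symmetry. apply op_xxz; auto.
    - assert (Hq : al z = al (op x x z)) by peq.
      rewrite (gcompRG _ _ Q2 z x (eq_sym H) x z H Hq); auto.
      rewrite d1R. symmetry. rewrite (idnR (be z) z); auto.
      apply clsL_eq'. symmetry. apply op_xxz; auto. }
Qed.

Lemma env_right : rtors_ax (bt_right (env_data P)).
Proof.
  change (rtors_ax (Build_RTData (pA P) (pB P) (pX P) (pal P) (pbe P) (GR P) (ractR P))).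
  unfold rtors_ax. cbn [rt_A rt_B rt_X rt_al rt_be rt_H rt_act].
  split; [apply GR_gpd|].
  split.
  { split; [|split].
    - intros w h. induction h as [x z H0] using cL_ind. intros Hw.
      rewrite ractR_cls, d1R. pose proof Hw as K. rewrite d0R in K. peq.
    - intros x Hx. rewrite (ractG _ x x eq_refl); [apply op_xxz; auto|].
      apply idnR; auto.
    - intros w h k. induction h as [x1 z1 K1] using cL_ind. induction k as [x2 z2 K2] using cL_ind.
      intros Q1 Q2 Q3 Q4.
      pose proof Q1 as E1. rewrite d0R in E1. pose proof Q3 as E3. rewrite d1R, d0R in E3.
      rewrite ractR_cls. rewrite ractR_cls.
      assert (Hq : al x1 = al (op x2 z1 z2)) by peq.
      rewrite (ractG _ x1 (op x2 z1 z2) Hq).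
      + apply op_P6; peq.
      + apply gcompR. }
  split; [destruct (pax P) as (Q&_); exact Q|].
  split; [destruct (pax P) as (_&_&Q&_); exact Q|].
  split.
  { intros h h' w. induction h as [x1 z1 K1] using cL_ind. induction h' as [x2 z2 K2] using cL_ind.
    intros Q Q' E. rewrite !ractR_cls in E.
    pose proof Q as E1. rewrite d0R in E1. pose proof Q' as E2. rewrite d0R in E2.
    assert (Hq : al w = al (op x1 w z1)) by peq.
    transitivity (clsL w (op x1 w z1) Hq).
    - apply clsL_eq; peq.
    - symmetry. apply clsL_eq; [peq|exact E]. }
  split; [destruct (pax P) as (_&Q&_); exact Q|].
  { intros x y. split.
    - intro E. assert (Q : be x = @d0 _ (GR P) (clsL x y E)) by (rewrite d0R; auto).
      exists (clsL x y E), Q. rewrite ractR_cls. apply op_xxz; auto.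
    - intros (h&Q&E). revert Q E. induction h as [x1 z1 K1] using cL_ind. intros Q E.
      rewrite ractR_cls in E. pose proof Q as E1. rewrite d0R in E1. subst y. peq. }
Qed.

Lemma henv : btors_ax (env_data P).
Proof.
  split; [apply env_left|]. split; [apply env_right|].
  change (forall (g : arr (GL P)) (x : pX P) (h : arr (GR P))
          (H1 : pbe P x = d0 h) (H2 : pal P (ractR P x h H1) = d1 g)
          (H3 : pal P x = d1 g) (H4 : pbe P (lactL P g x H3) = d0 h),
      lactL P g (ractR P x h H1) H2 = ractR P (lactL P g x H3) h H4).
  intros g. induction g as [x1 y1 K1] using cR_ind. intros x h. induction h as [x2 z2 K2] using cL_ind.
  intros Q1 Q2 Q3 Q4. rewrite lactL_cls, !ractR_cls, lactL_cls.
  pose proof Q1 as E1. rewrite d0R in E1. pose proof Q3 as E3. rewrite d1L in E3.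
  symmetry. apply op_P6; peq.
Qed.
End EnvR.

Section EnvHom.
Variables P P' : Pregpd.
Variable f : PHom P P'.
Local Notation al := (pal P).
Local Notation be := (pbe P).
Local Notation op := (opT (pd P)).
Local Notation al' := (pal P').
Local Notation be' := (pbe P').
Local Notation op' := (opT (pd P')).
Local Notation fX := (ph_X f).
Ltac peq := cbn in *; first [exact (pax _) | congruence | rewrite op_be; peq | rewrite op_al; peq].
Notation clsR P x y H := (@qcls (TR P) (RR P) (exist _ (x, y) H)).
Notation clsL P x z H := (@qcls (TL P) (RL P) (exist _ (x, z) H)).

Lemma f_al x : al' (fX x) = ph_A f (al x).
Proof. destruct (phax f) as (Q&_). apply Q. Qed.
Lemma f_be x : be' (fX x) = ph_B f (be x).
Proof. destruct (phax f) as (_&Q&_). apply Q. Qed.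
Lemma f_op x y z : be x = be y -> al x = al z -> fX (op x y z) = op' (fX x) (fX y) (fX z).
Proof.
  intros H1 H2. destruct (phax f) as (_&_&Q).
  assert (H1' : be' (fX x) = be' (fX y)) by (rewrite !f_be; congruence).
  assert (H2' : al' (fX x) = al' (fX z)) by (rewrite !f_al; congruence).
  rewrite <- (opE _ x y z H1 H2), <- (opE _ _ _ _ H1' H2'). apply Q.
Qed.

Lemma hG_cls x y H H' : bh_G (env_hom_data f) (clsR P x y H) = clsR P' (fX x) (fX y) H'.
Proof.
  unfold env_hom_data. cbn [bh_G]. symmetry.
  destruct (rx_cls P x y H) as [E1 E2].
  apply clsR_eq.
  - rewrite !f_al. congruence.
  - rewrite E2. apply f_op; cbn in *; congruence.
Qed.
Lemma hH_cls x z H H' : bh_H (env_hom_data f) (clsL P x z H) = clsL P' (fX x) (fX z) H'.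
Proof.
  unfold env_hom_data. cbn [bh_H]. symmetry.
  destruct (lx_cls P x z H) as [E1 E2].
  apply clsL_eq.
  - rewrite !f_be. congruence.
  - rewrite E2. apply f_op; cbn in *; congruence.
Qed.

Lemma henvm : bthom_ax (env_hom_data f).
Proof.
  split.
  - change (lthom_ax (@Build_LTHomData (bt_left (env_data P)) (bt_left (env_data P'))
             (ph_A f) (ph_B f) (ph_X f) (bh_G (env_hom_data f)))).
    split; [|split; [|split]].
    + split; [|split].
      * intro g. induction g as [x y H] using cR_ind.
        assert (H' : be' (fX x) = be' (fX y)) by (rewrite !f_be; simpl in H; congruence).
        cbn [lh_G lh_A]. rewrite (hG_cls x y H H').
        change (@d0 _ (GL P') (clsR P' (fX x) (fX y) H') = ph_A f (@d0 _ (GL P) (clsR P x y H)) /\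
                @d1 _ (GL P') (clsR P' (fX x) (fX y) H') = ph_A f (@d1 _ (GL P) (clsR P x y H))).
        rewrite !d0L, !d1L, !f_al. auto.
      * intro a. cbn [lh_G lh_A].
        change (bh_G (env_hom_data f) (idn (GL P) a) = idn (GL P') (ph_A f a)).
        rewrite (idnL P a (pick_al P a) (pick_al_spec P a)).
        rewrite (hG_cls _ _ _ eq_refl). symmetry. apply idnL. rewrite f_al, pick_al_spec. auto.
      * intros g h. induction g as [x1 y1 K1] using cR_ind. induction h as [x2 y2 K2] using cR_ind.
        intros Q Q'. cbn [lh_G] in *.
        change (@d1 _ (GL P) (clsR P x1 y1 K1) = @d0 _ (GL P) (clsR P x2 y2 K2)) in Q.
        pose proof Q as E. rewrite d1L, d0L in E.
        assert (Hq : be x2 = be (op x1 y1 y2)) by peq.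
        change (bh_G (env_hom_data f) (GLcomp P (clsR P x1 y1 K1) (clsR P x2 y2 K2) Q) =
                @gcomp _ (GL P') (bh_G (env_hom_data f) (clsR P x1 y1 K1))
                    (bh_G (env_hom_data f) (clsR P x2 y2 K2)) Q').
        rewrite (gcompL P x1 y1 K1 x2 y2 K2 Q Hq).
        assert (Hq' : be' (fX x2) = be' (fX (op x1 y1 y2))) by (rewrite !f_be; congruence).
        rewrite (hG_cls _ _ _ Hq').
        assert (L1 : be' (fX x1) = be' (fX y1)) by (rewrite !f_be; simpl in K1; congruence).
        assert (L2 : be' (fX x2) = be' (fX y2)) by (rewrite !f_be; simpl in K2; congruence).
        assert (Hq'' : be' (fX x2) = be' (op' (fX x1) (fX y1) (fX y2))).
        { rewrite op_be; auto. rewrite !f_al; congruence. }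
        rewrite (gcompG P' _ _ Q' (fX x1) (fX y1) L1 (fX x2) (fX y2) L2 Hq'').
        -- apply clsR_eq'. apply f_op; peq.
        -- apply hG_cls.
        -- apply hG_cls.
    + intro x. apply f_al.
    + intro x. apply f_be.
    + intro g. induction g as [x y H] using cR_ind. intros z Q Q'.
      cbn [lh_X lh_G lt_act bt_left env_data bt_lact] in *.
      rewrite lactL_cls.
      assert (H' : be' (fX x) = be' (fX y)) by (rewrite !f_be; simpl in H; congruence).
      rewrite (lactG P' _ (fX x) (fX y) H'); [|apply hG_cls].
      pose proof Q as E. change (al z = @d1 _ (GL P) (clsR P x y H)) in E. rewrite d1L in E.
      apply f_op; cbn in *; congruence.
  - change (rthom_ax (@Build_RTHomData (bt_right (env_data P)) (bt_right (env_data P'))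
             (ph_A f) (ph_B f) (ph_X f) (bh_H (env_hom_data f)))).
    split; [|split; [|split]].
    + split; [|split].
      * intro g. induction g as [x z H] using cL_ind.
        assert (H' : al' (fX x) = al' (fX z)) by (rewrite !f_al; simpl in H; congruence).
        cbn [rh_H rh_B]. rewrite (hH_cls x z H H').
        change (@d0 _ (GR P') (clsL P' (fX x) (fX z) H') = ph_B f (@d0 _ (GR P) (clsL P x z H)) /\
                @d1 _ (GR P') (clsL P' (fX x) (fX z) H') = ph_B f (@d1 _ (GR P) (clsL P x z H))).
        rewrite !d0R, !d1R, !f_be. auto.
      * intro b. cbn [rh_H rh_B].
        change (bh_H (env_hom_data f) (idn (GR P) b) = idn (GR P') (ph_B f b)).
        rewrite (idnR P b (pick_be P b) (pick_be_spec P b)).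
        rewrite (hH_cls _ _ _ eq_refl). symmetry. apply idnR. rewrite f_be, pick_be_spec. auto.
      * intros g h. induction g as [x1 z1 K1] using cL_ind. induction h as [x2 z2 K2] using cL_ind.
        intros Q Q'. cbn [rh_H] in *.
        change (@d1 _ (GR P) (clsL P x1 z1 K1) = @d0 _ (GR P) (clsL P x2 z2 K2)) in Q.
        pose proof Q as E. rewrite d1R, d0R in E.
        assert (Hq : al x1 = al (op x2 z1 z2)) by peq.
        change (bh_H (env_hom_data f) (GRcomp P (clsL P x1 z1 K1) (clsL P x2 z2 K2) Q) =
                @gcomp _ (GR P') (bh_H (env_hom_data f) (clsL P x1 z1 K1))
                    (bh_H (env_hom_data f) (clsL P x2 z2 K2)) Q').
        rewrite (gcompR P x1 z1 K1 x2 z2 K2 Q Hq).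
        assert (Hq' : al' (fX x1) = al' (fX (op x2 z1 z2))) by (rewrite !f_al; congruence).
        rewrite (hH_cls _ _ _ Hq').
        assert (L1 : al' (fX x1) = al' (fX z1)) by (rewrite !f_al; simpl in K1; congruence).
        assert (L2 : al' (fX x2) = al' (fX z2)) by (rewrite !f_al; simpl in K2; congruence).
        assert (Hq'' : al' (fX x1) = al' (op' (fX x2) (fX z1) (fX z2))).
        { rewrite op_al; auto; rewrite !f_be; congruence. }
        rewrite (gcompRG P' _ _ Q' (fX x1) (fX z1) L1 (fX x2) (fX z2) L2 Hq'').
        -- apply clsL_eq'. apply f_op; peq.
        -- apply hH_cls.
        -- apply hH_cls.
    + intro x. apply f_al.
    + intro x. apply f_be.
    + intros w h. induction h as [x z H] using cL_ind. intros Q Q'.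
      cbn [rh_X rh_H rt_act bt_right env_data bt_ract] in *.
      rewrite ractR_cls.
      assert (H' : al' (fX x) = al' (fX z)) by (rewrite !f_al; simpl in H; congruence).
      rewrite (ractG P' _ (fX x) (fX z) H'); [|apply hH_cls].
      pose proof Q as E. change (be w = @d0 _ (GR P) (clsL P x z H)) in E. rewrite d0R in E.
      apply f_op; cbn in *; congruence.
Qed.
End EnvHom.

Lemma lthom_ext {T T' : LTors} (f g : LTHom T T') :
  lh_A f = lh_A g -> lh_B f = lh_B g -> lh_X f = lh_X g -> lh_G f = lh_G g -> f = g.
Proof.
  destruct f as [[a b x k] p], g as [[a' b' x' k'] p']; simpl; intros; subst.
  f_equal. apply proof_irrelevance.
Qed.
Lemma rthom_ext {T T' : RTors} (f g : RTHom T T') :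
  rh_A f = rh_A g -> rh_B f = rh_B g -> rh_X f = rh_X g -> rh_H f = rh_H g -> f = g.
Proof.
  destruct f as [[a b x k] p], g as [[a' b' x' k'] p']; simpl; intros; subst.
  f_equal. apply proof_irrelevance.
Qed.
Lemma bthom_ext {T T' : BTors} (f g : BTHom T T') :
  bh_A f = bh_A g -> bh_B f = bh_B g -> bh_X f = bh_X g -> bh_G f = bh_G g -> bh_H f = bh_H g -> f = g.
Proof.
  destruct f as [[a b x k l] p], g as [[a' b' x' k' l'] p']; simpl; intros; subst.
  f_equal. apply proof_irrelevance.
Qed.
Lemma phom_ext {P P' : Pregpd} (f g : PHom P P') :
  ph_A f = ph_A g -> ph_B f = ph_B g -> ph_X f = ph_X g -> f = g.
Proof.
  destruct f as [[a b x] p], g as [[a' b' x'] p']; simpl; intros; subst.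
  f_equal. apply proof_irrelevance.
Qed.

Definition CL := c_l hcl hclm.
Definition CR := c_r hcr hcrm.
Definition ENV := env henv henvm.

Lemma Fcomp_functor {C D E : Cat} (G : Functor D E) (F : Functor C D) :
  is_functor G -> is_functor F -> is_functor (Fcomp G F).
Proof.
  intros [G1 G2] [F1 F2]. split.
  - intro a. simpl. rewrite F1. apply G1.
  - intros a b c g f. simpl. rewrite F2. apply G2.
Qed.

Lemma Ur_functor : is_functor U_r.
Proof. split; intros; apply lthom_ext; reflexivity. Qed.
Lemma Ul_functor : is_functor U_l.
Proof. split; intros; apply rthom_ext; reflexivity. Qed.
Lemma CL_functor : is_functor CL.
Proof. split; intros; apply phom_ext; reflexivity. Qed.
Lemma CR_functor : is_functor CR.
Proof. split; intros; apply phom_ext; reflexivity. Qed.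

Notation clsR P x y H := (@qcls (TR P) (RR P) (exist _ (x, y) H)).
Notation clsL P x z H := (@qcls (TL P) (RL P) (exist _ (x, z) H)).

Lemma ENV_functor : is_functor ENV.
Proof.
  split.
  - intro P. apply bthom_ext; try reflexivity.
    + apply functional_extensionality. intro c. induction c as [x y H] using cR_ind.
      cbn [fm ENV env bthd]. etransitivity; [apply (hG_cls _ _ (phom_id P) x y H H)|]. reflexivity.
    + apply functional_extensionality. intro c. induction c as [x z H] using cL_ind.
      cbn [fm ENV env bthd]. etransitivity; [apply (hH_cls _ _ (phom_id P) x z H H)|]. reflexivity.
  - intros P P' P'' g f. apply bthom_ext; try reflexivity.
    + apply functional_extensionality. intro c. induction c as [x y H] using cR_ind.
      cbn [fm ENV env bthd cmp BTCat bthom_comp bh_G].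
      assert (H1 : pbe P' (ph_X f x) = pbe P' (ph_X f y)) by (rewrite !f_be; simpl in H; congruence).
      assert (H2 : pbe P'' (ph_X g (ph_X f x)) = pbe P'' (ph_X g (ph_X f y))) by (rewrite !f_be; simpl in H; congruence).
      etransitivity; [apply (hG_cls _ _ (phom_comp P P' P'' g f) x y H H2)|].
      etransitivity; [|symmetry; apply (f_equal (bh_G (env_hom_data g))); apply (hG_cls _ _ f x y H H1)].
      symmetry. apply (hG_cls _ _ g _ _ H1 H2).
    + apply functional_extensionality. intro c. induction c as [x z H] using cL_ind.
      cbn [fm ENV env bthd cmp BTCat bthom_comp bh_H].
      assert (H1 : pal P' (ph_X f x) = pal P' (ph_X f z)) by (rewrite !f_al; simpl in H; congruence).
      assert (H2 : pal P'' (ph_X g (ph_X f x)) = pal P'' (ph_X g (ph_X f z))) by (rewrite !f_al; simpl in H; congruence).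
      etransitivity; [apply (hH_cls _ _ (phom_comp P P' P'' g f) x z H H2)|].
      etransitivity; [|symmetry; apply (f_equal (bh_H (env_hom_data g))); apply (hH_cls _ _ f x z H H1)].
      symmetry. apply (hH_cls _ _ g _ _ H1 H2).
Qed.

Definition tr {A B : Type} (e : A = B) (x : A) : B := match e with eq_refl => x end.
Lemma tr_refl (T : Type) (e : T = T) x : tr e x = x.
Proof. rewrite (proof_irrelevance _ e eq_refl). reflexivity. Qed.

Lemma hcast_P (P1 P2 Q1 Q2 : Pregpd) (e1 : P1 = P2) (e2 : Q1 = Q2)
  (f : PHom P1 Q1) (g : PHom P2 Q2) :
  (forall a, ph_A g (tr (f_equal (fun P : Pregpd => pA P) e1) a) =
             tr (f_equal (fun P : Pregpd => pA P) e2) (ph_A f a)) ->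
  (forall b, ph_B g (tr (f_equal (fun P : Pregpd => pB P) e1) b) =
             tr (f_equal (fun P : Pregpd => pB P) e2) (ph_B f b)) ->
  (forall x, ph_X g (tr (f_equal (fun P : Pregpd => pX P) e1) x) =
             tr (f_equal (fun P : Pregpd => pX P) e2) (ph_X f x)) ->
  @hcast PCat P1 P2 Q1 Q2 e1 e2 f = g.
Proof.
  destruct e1, e2. simpl. intros HA HB HX. symmetry.
  apply phom_ext; apply functional_extensionality; auto.
Qed.

Lemma preg_eq (A B X : Type) al be op1 op2 p1 p2 : op1 = op2 ->
  Build_Pregpd (Build_PData A B X al be op1) p1 = Build_Pregpd (Build_PData A B X al be op2) p2.
Proof. intros ->. f_equal. apply proof_irrelevance. Qed.

Lemma preg_eta (P : Pregpd) op p : op = pop P ->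
  Build_Pregpd (Build_PData (pA P) (pB P) (pX P) (pal P) (pbe P) op) p = P.
Proof.
  destruct P as [[A B X al be op0] p0]. simpl. intros ->. f_equal. apply proof_irrelevance.
Qed.

Lemma pop_ext (P : PData) (op1 : forall x y z : pX P, pbe P x = pbe P y -> pal P x = pal P z -> pX P) :
  (forall x y z H1 H2, op1 x y z H1 H2 = opT P x y z) -> op1 = pop P.
Proof.
  intro K. apply functional_extensionality_dep; intro x.
  apply functional_extensionality_dep; intro y.
  apply functional_extensionality_dep; intro z.
  apply functional_extensionality_dep; intro H1.
  apply functional_extensionality_dep; intro H2.
  rewrite K, opE. reflexivity.
Qed.

Lemma bt_commT (T : BTors) g x h : bt_al T x = d1 g -> bt_be T x = d0 h ->
  lactT (bt_lt T) g (ractT (bt_rt T) x h) = ractT (bt_rt T) (lactT (bt_lt T) g x) h.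
Proof.
  intros Hg Hh. destruct (btax T) as (_&_&Q).
  assert (H2 : bt_al T (bt_ract T x h Hh) = d1 g)
    by (change (rt_al (bt_rt T) (rt_act (bt_rt T) x h Hh) = d1 g); rewrite ractE, ract_al; auto).
  assert (H4 : bt_be T (bt_lact T g x Hg) = d0 h)
    by (change (lt_be (bt_lt T) (lt_act (bt_lt T) g x Hg) = d0 h); rewrite lactE, lact_be; auto).
  pose proof (Q g x h Hh H2 Hg H4) as E.
  change (lt_act (bt_lt T) g (rt_act (bt_rt T) x h Hh) H2 =
          rt_act (bt_rt T) (lt_act (bt_lt T) g x Hg) h H4) in E.
  rewrite !lactE, !ractE, !lactE in E. exact E.
Qed.

Lemma op_lr (T : BTors) x y z (H1 : bt_be T x = bt_be T y) (H2 : bt_al T x = bt_al T z) :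
  cr_op (bt_rt T) x y z H1 H2 = opT (cl_data (bt_lt T)) x y z.
Proof.
  change (pop (cr_data (bt_rt T)) x y z H1 H2 = opT (cl_data (bt_lt T)) x y z).
  rewrite opE.
  destruct (proj1 (lt_orb (bt_lt T) x y) H1) as (g&Hg&Eg).
  destruct (proj1 (rt_orb (bt_rt T) x z) H2) as (h&Hh&Eh).
  rewrite (cr_specT (bt_rt T) x y z h); auto.
  rewrite (cl_specT (bt_lt T) x y z g); auto.
  rewrite <- Eh, bt_commT; auto. rewrite Eg. reflexivity.
Qed.

Lemma part_ii : functor_eq (Fcomp CR U_l) (Fcomp CL U_r).
Proof.
  unshelve eexists.
  - intro T. cbn. apply preg_eq.
    apply functional_extensionality_dep; intro x.
    apply functional_extensionality_dep; intro y.
    apply functional_extensionality_dep; intro z.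
    apply functional_extensionality_dep; intro H1.
    apply functional_extensionality_dep; intro H2.
    rewrite op_lr. exact (eq_sym (opE (cl_data (bt_lt T)) x y z H1 H2)).
  - intros T T' f. apply hcast_P; intros; rewrite !tr_refl; reflexivity.
Qed.


Lemma env_lact (P : Pregpd) c x y H z : c = clsR P x y H -> pal P z = pal P x ->
  lactT (bt_lt (fo ENV P)) c z = opT P x y z.
Proof.
  intros -> Hz.
  assert (Q : pal P z = @d1 _ (GL P) (clsR P x y H)) by (rewrite d1L; auto).
  rewrite <- (lactE (bt_lt (fo ENV P)) _ _ Q). apply lactL_cls.
Qed.
Lemma env_ract (P : Pregpd) c x z H w : c = clsL P x z H -> pbe P w = pbe P x ->
  ractT (bt_rt (fo ENV P)) w c = opT P x w z.
Proof.
  intros -> Hw.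
  assert (Q : pbe P w = @d0 _ (GR P) (clsL P x z H)) by (rewrite d0R; auto).
  rewrite <- (ractE (bt_rt (fo ENV P)) _ _ Q). apply ractR_cls.
Qed.

Lemma cl_env (P : Pregpd) x y z H1 H2 : cl_op (bt_lt (fo ENV P)) x y z H1 H2 = opT P x y z.
Proof.
  change (pop (cl_data (bt_lt (fo ENV P))) x y z H1 H2 = opT P x y z). rewrite opE.
  assert (Q : pal P x = @d1 _ (GL P) (clsR P x y H1)) by (rewrite d1L; auto).
  rewrite (cl_specT (bt_lt (fo ENV P)) x y z (clsR P x y H1)); auto.
  - apply (env_lact P _ x y H1); auto.
  - rewrite (env_lact P _ x y H1); auto. apply op_xyx; auto.
Qed.
Lemma cr_env (P : Pregpd) x y z H1 H2 : cr_op (bt_rt (fo ENV P)) x y z H1 H2 = opT P x y z.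
Proof.
  change (pop (cr_data (bt_rt (fo ENV P))) x y z H1 H2 = opT P x y z). rewrite opE.
  assert (Q : pbe P x = @d0 _ (GR P) (clsL P x z H2)) by (rewrite d0R; auto).
  rewrite (cr_specT (bt_rt (fo ENV P)) x y z (clsL P x z H2)); auto.
  - apply (env_ract P _ x z H2); auto.
  - rewrite (env_ract P _ x z H2); auto. apply op_xxz; auto.
Qed.

Lemma part_iii_l : functor_eq (Fcomp CL (Fcomp U_r ENV)) (Fid PCat).
Proof.
  unshelve eexists.
  - intro P. exact (preg_eta P _ _ (pop_ext P _ (cl_env P))).
  - intros P P' f. apply hcast_P; intros; rewrite !tr_refl; reflexivity.
Qed.
Lemma part_iii_r : functor_eq (Fcomp CR (Fcomp U_l ENV)) (Fid PCat).
Proof.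
  unshelve eexists.
  - intro P. exact (preg_eta P _ _ (pop_ext P _ (cr_env P))).
  - intros P P' f. apply hcast_P; intros; rewrite !tr_refl; reflexivity.
Qed.

Section LIso.
Variable L : LTors.
Local Notation al := (lt_al L).
Local Notation be := (lt_be L).
Local Notation GG := (lt_G L).
Variable op : forall x y z : lt_X L, be x = be y -> al x = al z -> lt_X L.
Variable p : pregpd_ax (Build_PData (lt_A L) (lt_B L) (lt_X L) al be op).
Definition PPL : Pregpd := Build_Pregpd _ p.
Hypothesis spec : forall x y z g, al x = d1 g -> lactT L g x = y -> al x = al z ->
  opT (pd PPL) x y z = lactT L g z.
Notation clsR P x y H := (@qcls (TR P) (RR P) (exist _ (x, y) H)).

Lemma ex_g (c : XXinv PPL) : exists g, al (rx PPL c) = d1 g /\ lactT L g (rx PPL c) = ry PPL c.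
Proof. apply lt_orb. exact (rxy PPL c). Qed.
Definition etaG (c : XXinv PPL) : arr GG := proj1_sig (constructive_indefinite_description _ (ex_g c)).
Lemma etaG_spec c : al (rx PPL c) = d1 (etaG c) /\ lactT L (etaG c) (rx PPL c) = ry PPL c.
Proof. unfold etaG. destruct (constructive_indefinite_description _ _) as [g Hg]. exact Hg. Qed.
Lemma etaG_cls (x y : pX PPL) (H : pbe PPL x = pbe PPL y) g : al x = d1 g -> lactT L g x = y -> etaG (clsR PPL x y H) = g.
Proof.
  intros Hg Eg. destruct (etaG_spec (clsR PPL x y H)) as [E1 E2].
  destruct (rx_cls PPL x y H) as [F1 F2].
  apply (lact_free L _ _ (rx PPL (clsR PPL x y H))); auto.
  - etransitivity; [exact F1|exact Hg].
  - etransitivity; [exact E2|]. etransitivity; [exact F2|].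
    apply spec; auto.
Qed.

Lemma etaG_clsG c (x y : pX PPL) (H : pbe PPL x = pbe PPL y) g : c = clsR PPL x y H -> al x = d1 g -> lactT L g x = y -> etaG c = g.
Proof. intros ->. apply etaG_cls. Qed.

Lemma ex_pk (g : arr GG) : exists x, al x = d1 g.
Proof. apply lt_surj_al. Qed.
Definition pk (g : arr GG) : lt_X L := proj1_sig (constructive_indefinite_description _ (ex_pk g)).
Lemma pk_spec g : al (pk g) = d1 g.
Proof. unfold pk. destruct (constructive_indefinite_description _ _) as [x Hx]. exact Hx. Qed.
Lemma pk_be g : be (pk g) = be (lactT L g (pk g)).
Proof. symmetry. apply lact_be. apply pk_spec. Qed.
Definition thetaG (g : arr GG) : XXinv PPL :=
  @qcls (TR PPL) (RR PPL) (exist (fun q : lt_X L * lt_X L => be (fst q) = be (snd q))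
                                 (pk g, lactT L g (pk g)) (pk_be g)).
Lemma thetaG_cls g (x : pX PPL) (H : pbe PPL x = pbe PPL (lactT L g x)) : al x = d1 g -> thetaG g = clsR PPL x (lactT L g x) H.
Proof.
  intro Hx. unfold thetaG. apply clsR_eq.
  - cbn. rewrite pk_spec. auto.
  - symmetry. apply spec; auto. apply pk_spec. rewrite pk_spec; auto.
Qed.

Lemma d1_G c : @d1 _ (GL PPL) c = d1 (etaG c).
Proof. destruct (etaG_spec c) as [E _]. exact E. Qed.

Lemma etaL_ax : lthom_ax (@Build_LTHomData (bt_left (env_data PPL)) L
                 (fun a => a) (fun b => b) (fun x => x) etaG).
Proof.
  pose proof (lt_gpd L) as hG.
  split; [|split; [|split]].
  - split; [|split].
    + intro c. induction c as [x y H] using cR_ind. cbn [lh_G lh_A].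
      change (d0 (etaG (clsR PPL x y H)) = @d0 _ (GL PPL) (clsR PPL x y H) /\
              d1 (etaG (clsR PPL x y H)) = @d1 _ (GL PPL) (clsR PPL x y H)).
      rewrite d0L, d1L.
      destruct (proj1 (lt_orb L x y) H) as (g&Hg&Eg).
      rewrite (etaG_clsG _ x y H g eq_refl Hg Eg). split; auto.
      change (d0 g = al y). rewrite <- Eg, lact_al; auto.
    + intro a. cbn [lh_G lh_A].
      change (etaG (idn (GL PPL) a) = idn GG a).
      destruct (lt_surj_al L a) as [q Hq].
      rewrite (idnL PPL a q Hq). apply etaG_cls.
      * rewrite idn_d1; auto.
      * apply lact_id'; auto.
    + intros c1 c2. induction c1 as [x1 y1 K1] using cR_ind. induction c2 as [x2 y2 K2] using cR_ind.
      intros Q Q'. cbn [lh_G] in *.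
      change (@d1 _ (GL PPL) (clsR PPL x1 y1 K1) = @d0 _ (GL PPL) (clsR PPL x2 y2 K2)) in Q.
      pose proof Q as E. rewrite d1L, d0L in E.
      destruct (proj1 (lt_orb L x1 y1) K1) as (g1&Hg1&Eg1).
      destruct (proj1 (lt_orb L x2 y2) K2) as (g2&Hg2&Eg2).
      assert (Hq : be x2 = be (opT (pd PPL) x1 y1 y2)).
      { rewrite (spec x1 y1 y2 g1); auto. rewrite lact_be; auto; cbn in *; congruence. }
      change (etaG (GLcomp PPL (clsR PPL x1 y1 K1) (clsR PPL x2 y2 K2) Q) =
              gcomp (etaG (clsR PPL x1 y1 K1)) (etaG (clsR PPL x2 y2 K2)) Q').
      rewrite (gcompL PPL x1 y1 K1 x2 y2 K2 Q Hq).
      rewrite gcE.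
      assert (D12 : d1 g1 = d0 g2) by (rewrite <- Hg1; cbn in E; rewrite E, <- Eg2, lact_al; auto).
      transitivity (gcT GG g1 g2).
      * apply etaG_cls.
        -- rewrite gc_d1; auto.
        -- rewrite <- lact_comp; auto. rewrite Eg2. symmetry. apply spec; auto.
      * f_equal; symmetry; apply etaG_cls; auto.
  - intro x. reflexivity.
  - intro x. reflexivity.
  - intro c. induction c as [x y H] using cR_ind. intros z Q Q'.
    cbn [lh_X lh_G lt_act bt_left env_data bt_lact] in *.
    rewrite lactL_cls. rewrite lactE.
    destruct (proj1 (lt_orb L x y) H) as (g&Hg&Eg).
    change (al z = @d1 _ (GL PPL) (clsR PPL x y H)) in Q. rewrite d1L in Q.
    rewrite (etaG_clsG _ x y H g eq_refl); auto.
Qed.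

Lemma theta_eta c : thetaG (etaG c) = c.
Proof.
  induction c as [x y H] using cR_ind.
  destruct (proj1 (lt_orb L x y) H) as (g&Hg&Eg).
  rewrite (etaG_clsG _ x y H g eq_refl); auto.
  assert (H' : pbe PPL x = pbe PPL (lactT L g x)) by (rewrite Eg; exact H).
  rewrite (thetaG_cls g x H'); auto. apply clsR_eq'. auto.
Qed.
Lemma eta_theta g : etaG (thetaG g) = g.
Proof. unfold thetaG. apply etaG_cls; auto. apply pk_spec. Qed.

Lemma thetaL_ax : lthom_ax (@Build_LTHomData L (bt_left (env_data PPL))
                 (fun a => a) (fun b => b) (fun x => x) thetaG).
Proof.
  pose proof (lt_gpd L) as hG.
  split; [|split; [|split]].
  - split; [|split].
    + intro g. cbn [lh_G lh_A].
      change (@d0 _ (GL PPL) (thetaG g) = d0 g /\ @d1 _ (GL PPL) (thetaG g) = d1 g).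
      unfold thetaG. rewrite d0L, d1L. split.
      * apply lact_al. apply pk_spec.
      * apply pk_spec.
    + intro a. cbn [lh_G lh_A].
      change (thetaG (idn GG a) = idn (GL PPL) a).
      destruct (lt_surj_al L a) as [q Hq].
      assert (H' : pbe PPL q = pbe PPL (lactT L (idn GG a) q)) by (rewrite lact_id'; auto).
      rewrite (thetaG_cls _ q H'). 2: { rewrite idn_d1; auto. }
      rewrite (idnL PPL a q Hq). apply clsR_eq'. apply lact_id'; auto.
    + intros g1 g2 Q Q'. cbn [lh_G] in *.
      change (thetaG (gcomp g1 g2 Q) = @gcomp _ (GL PPL) (thetaG g1) (thetaG g2) Q').
      rewrite gcE.
      destruct (lt_surj_al L (d1 g2)) as [x Hx].
      set (y := lactT L g2 x).
      assert (Hy : al y = d1 g1) by (unfold y; rewrite lact_al; auto).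
      assert (K2 : pbe PPL x = pbe PPL y) by (unfold y; cbn; rewrite lact_be; auto).
      assert (K1 : pbe PPL y = pbe PPL (lactT L g1 y)) by (cbn; rewrite lact_be; auto).
      assert (K : pbe PPL x = pbe PPL (lactT L (gcT GG g1 g2) x)) by (cbn; rewrite lact_be; auto; rewrite gc_d1; auto).
      rewrite (thetaG_cls _ x K). 2: { rewrite gc_d1; auto. }
      assert (Hq : pbe PPL x = pbe PPL (opT (pd PPL) y (lactT L g1 y) y)).
      { rewrite op_xyx; auto. cbn in *; congruence. }
      rewrite (gcompG PPL (thetaG g1) (thetaG g2) Q' y (lactT L g1 y) K1 x y K2 Hq).
      * apply clsR_eq'. rewrite op_xyx; auto. unfold y. rewrite lact_comp; auto.
      * apply thetaG_cls; auto.
      * apply thetaG_cls; auto.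
  - intro x. reflexivity.
  - intro x. reflexivity.
  - intros g z Q Q'.
    cbn [lh_X lh_G lt_act bt_left env_data bt_lact] in *.
    rewrite lactE.
    assert (H' : pbe PPL z = pbe PPL (lactT L g z)) by (cbn; rewrite lact_be; auto).
    rewrite (lactG PPL (thetaG g) z (lactT L g z) H'); [|apply thetaG_cls; auto].
    rewrite op_xyx; auto.
Qed.
End LIso.

Section RIso.
Variable R : RTors.
Local Notation al := (rt_al R).
Local Notation be := (rt_be R).
Local Notation HH := (rt_H R).
Variable op : forall x y z : rt_X R, be x = be y -> al x = al z -> rt_X R.
Variable p : pregpd_ax (Build_PData (rt_A R) (rt_B R) (rt_X R) al be op).
Definition PPR : Pregpd := Build_Pregpd _ p.
Hypothesis spec : forall x y z h, be x = d0 h -> ractT R x h = z -> be x = be y ->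
  opT (pd PPR) x y z = ractT R y h.
Notation clsL P x z H := (@qcls (TL P) (RL P) (exist _ (x, z) H)).

Lemma ex_h (c : XinvX PPR) : exists h, be (lx PPR c) = d0 h /\ ractT R (lx PPR c) h = lz PPR c.
Proof. apply rt_orb. exact (lxz PPR c). Qed.
Definition etaH (c : XinvX PPR) : arr HH := proj1_sig (constructive_indefinite_description _ (ex_h c)).
Lemma etaH_spec c : be (lx PPR c) = d0 (etaH c) /\ ractT R (lx PPR c) (etaH c) = lz PPR c.
Proof. unfold etaH. destruct (constructive_indefinite_description _ _) as [h Hh]. exact Hh. Qed.
Lemma etaH_cls (x z : pX PPR) (H : pal PPR x = pal PPR z) h :
  be x = d0 h -> ractT R x h = z -> etaH (clsL PPR x z H) = h.
Proof.
  intros Hh Eh. destruct (etaH_spec (clsL PPR x z H)) as [E1 E2].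
  destruct (lx_cls PPR x z H) as [F1 F2].
  apply (ract_free R _ _ (lx PPR (clsL PPR x z H))); auto.
  - etransitivity; [exact F1|exact Hh].
  - etransitivity; [exact E2|]. etransitivity; [exact F2|].
    apply spec; auto.
Qed.
Lemma etaH_clsG c (x z : pX PPR) (H : pal PPR x = pal PPR z) h :
  c = clsL PPR x z H -> be x = d0 h -> ractT R x h = z -> etaH c = h.
Proof. intros ->. apply etaH_cls. Qed.

Lemma ex_pkr (h : arr HH) : exists x, be x = d0 h.
Proof. apply rt_surj_be. Qed.
Definition pkr (h : arr HH) : rt_X R := proj1_sig (constructive_indefinite_description _ (ex_pkr h)).
Lemma pkr_spec h : be (pkr h) = d0 h.
Proof. unfold pkr. destruct (constructive_indefinite_description _ _) as [x Hx]. exact Hx. Qed.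
Lemma pkr_al h : al (pkr h) = al (ractT R (pkr h) h).
Proof. symmetry. apply ract_al. apply pkr_spec. Qed.
Definition thetaH (h : arr HH) : XinvX PPR :=
  @qcls (TL PPR) (RL PPR) (exist (fun q : rt_X R * rt_X R => al (fst q) = al (snd q))
                                 (pkr h, ractT R (pkr h) h) (pkr_al h)).
Lemma thetaH_cls h (x : pX PPR) (H : pal PPR x = pal PPR (ractT R x h)) :
  be x = d0 h -> thetaH h = clsL PPR x (ractT R x h) H.
Proof.
  intro Hx. unfold thetaH. apply clsL_eq.
  - cbn. rewrite pkr_spec. auto.
  - symmetry. apply spec; auto. apply pkr_spec. rewrite pkr_spec; auto.
Qed.

Lemma etaR_ax : rthom_ax (@Build_RTHomData (bt_right (env_data PPR)) R
                 (fun a => a) (fun b => b) (fun x => x) etaH).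
Proof.
  pose proof (rt_gpd R) as hG.
  split; [|split; [|split]].
  - split; [|split].
    + intro c. induction c as [x z H] using cL_ind. cbn [rh_H rh_B].
      change (d0 (etaH (clsL PPR x z H)) = @d0 _ (GR PPR) (clsL PPR x z H) /\
              d1 (etaH (clsL PPR x z H)) = @d1 _ (GR PPR) (clsL PPR x z H)).
      rewrite d0R, d1R.
      destruct (proj1 (rt_orb R x z) H) as (h&Hh&Eh).
      rewrite (etaH_clsG _ x z H h eq_refl Hh Eh). split; auto.
      change (d1 h = be z). rewrite <- Eh, ract_be; auto.
    + intro b. cbn [rh_H rh_B].
      change (etaH (idn (GR PPR) b) = idn HH b).
      destruct (rt_surj_be R b) as [q Hq].
      rewrite (idnR PPR b q Hq). apply etaH_cls.
      * rewrite idn_d0; auto.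
      * apply ract_id'; auto.
    + intros c1 c2. induction c1 as [x1 z1 K1] using cL_ind. induction c2 as [x2 z2 K2] using cL_ind.
      intros Q Q'. cbn [rh_H] in *.
      change (@d1 _ (GR PPR) (clsL PPR x1 z1 K1) = @d0 _ (GR PPR) (clsL PPR x2 z2 K2)) in Q.
      pose proof Q as E. rewrite d1R, d0R in E.
      destruct (proj1 (rt_orb R x1 z1) K1) as (h1&Hh1&Eh1).
      destruct (proj1 (rt_orb R x2 z2) K2) as (h2&Hh2&Eh2).
      assert (Hq : al x1 = al (opT (pd PPR) x2 z1 z2)).
      { rewrite (spec x2 z1 z2 h2); auto. rewrite ract_al; cbn in *; congruence. }
      change (etaH (GRcomp PPR (clsL PPR x1 z1 K1) (clsL PPR x2 z2 K2) Q) =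
              gcomp (etaH (clsL PPR x1 z1 K1)) (etaH (clsL PPR x2 z2 K2)) Q').
      rewrite (gcompR PPR x1 z1 K1 x2 z2 K2 Q Hq).
      rewrite gcE.
      assert (D12 : d1 h1 = d0 h2) by (rewrite <- Hh2; cbn in E; rewrite <- E, <- Eh1, ract_be; auto).
      transitivity (gcT HH h1 h2).
      * apply etaH_cls.
        -- rewrite gc_d0; auto.
        -- rewrite <- ract_comp; auto. rewrite Eh1. symmetry. apply spec; auto.
      * f_equal; symmetry; apply etaH_cls; auto.
  - intro x. reflexivity.
  - intro x. reflexivity.
  - intros w c. induction c as [x z H] using cL_ind. intros Q Q'.
    cbn [rh_X rh_H rt_act bt_right env_data bt_ract] in *.
    rewrite ractR_cls. rewrite ractE.
    destruct (proj1 (rt_orb R x z) H) as (h&Hh&Eh).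
    change (be w = @d0 _ (GR PPR) (clsL PPR x z H)) in Q. rewrite d0R in Q.
    rewrite (etaH_clsG _ x z H h eq_refl); auto.
Qed.

Lemma thetaR_eta c : thetaH (etaH c) = c.
Proof.
  induction c as [x z H] using cL_ind.
  destruct (proj1 (rt_orb R x z) H) as (h&Hh&Eh).
  rewrite (etaH_clsG _ x z H h eq_refl); auto.
  assert (H' : pal PPR x = pal PPR (ractT R x h)) by (rewrite Eh; exact H).
  rewrite (thetaH_cls h x H'); auto. apply clsL_eq'. auto.
Qed.
Lemma etaR_theta h : etaH (thetaH h) = h.
Proof. unfold thetaH. apply etaH_cls; auto. apply pkr_spec. Qed.

Lemma thetaR_ax : rthom_ax (@Build_RTHomData R (bt_right (env_data PPR))
                 (fun a => a) (fun b => b) (fun x => x) thetaH).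
Proof.
  pose proof (rt_gpd R) as hG.
  split; [|split; [|split]].
  - split; [|split].
    + intro h. cbn [rh_H rh_B].
      change (@d0 _ (GR PPR) (thetaH h) = d0 h /\ @d1 _ (GR PPR) (thetaH h) = d1 h).
      unfold thetaH. rewrite d0R, d1R. split.
      * apply pkr_spec.
      * apply ract_be. apply pkr_spec.
    + intro b. cbn [rh_H rh_B].
      change (thetaH (idn HH b) = idn (GR PPR) b).
      destruct (rt_surj_be R b) as [q Hq].
      assert (H' : pal PPR q = pal PPR (ractT R q (idn HH b))) by (rewrite ract_id'; auto).
      rewrite (thetaH_cls _ q H'). 2: { rewrite idn_d0; auto. }
      rewrite (idnR PPR b q Hq). apply clsL_eq'. apply ract_id'; auto.
    + intros h1 h2 Q Q'. cbn [rh_H] in *.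
      change (thetaH (gcomp h1 h2 Q) = @gcomp _ (GR PPR) (thetaH h1) (thetaH h2) Q').
      rewrite gcE.
      destruct (rt_surj_be R (d0 h1)) as [x Hx].
      set (y := ractT R x h1).
      assert (Hy : be y = d0 h2) by (unfold y; rewrite ract_be; auto).
      assert (K1 : pal PPR x = pal PPR y) by (unfold y; cbn; rewrite ract_al; auto).
      assert (K2 : pal PPR y = pal PPR (ractT R y h2)) by (cbn; rewrite ract_al; auto).
      assert (K : pal PPR x = pal PPR (ractT R x (gcT HH h1 h2)))
        by (cbn; rewrite ract_al; auto; rewrite gc_d0; auto).
      rewrite (thetaH_cls _ x K). 2: { rewrite gc_d0; auto. }
      assert (Hq : pal PPR x = pal PPR (opT (pd PPR) y y (ractT R y h2))).
      { rewrite op_xxz; auto. cbn in *; congruence. }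
      rewrite (gcompRG PPR (thetaH h1) (thetaH h2) Q' x y K1 y (ractT R y h2) K2 Hq).
      * apply clsL_eq'. rewrite op_xxz; auto. unfold y. rewrite ract_comp; auto.
      * apply thetaH_cls; auto.
      * apply thetaH_cls; auto.
  - intro x. reflexivity.
  - intro x. reflexivity.
  - intros z h Q Q'.
    cbn [rh_X rh_H rt_act bt_right env_data bt_ract] in *.
    rewrite ractE.
    assert (H' : pal PPR z = pal PPR (ractT R z h)) by (cbn; rewrite ract_al; auto).
    rewrite (ractG PPR (thetaH h) z (ractT R z h) H'); [|apply thetaH_cls; auto].
    rewrite op_xxz; auto.
Qed.
End RIso.


Notation SpecL L op p := (forall x y z g, lt_al L x = d1 g -> lactT L g x = y ->
   lt_al L x = lt_al L z -> opT (pd (PPL L op p)) x y z = lactT L g z).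
Notation SpecR R op p := (forall x y z h, rt_be R x = d0 h -> ractT R x h = z ->
   rt_be R x = rt_be R y -> opT (pd (PPR R op p)) x y z = ractT R y h).

Lemma etaG_nat (L L' : LTors) op p (spec : SpecL L op p) op' p' (spec' : SpecL L' op' p')
  (f : LTHom L L') (phi : PHom (PPL L op p) (PPL L' op' p'))
  (hX : forall x, ph_X phi x = lh_X f x) :
  forall c, etaG L' op' p' (bh_G (env_hom_data phi) c) = lh_G f (etaG L op p c).
Proof.
  intro c. induction c as [x y H] using cR_ind.
  destruct (proj1 (lt_orb L x y) H) as (g&Hg&Eg).
  assert (H' : pbe (PPL L' op' p') (ph_X phi x) = pbe (PPL L' op' p') (ph_X phi y))
    by (rewrite !f_be; cbn in *; congruence).
  transitivity (lh_G f g).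
  - apply (etaG_clsG L' op' p' spec' _ (ph_X phi x) (ph_X phi y) H').
    + apply hG_cls.
    + rewrite hX. destruct (lthax f) as ((F1&_)&F2&_). rewrite F2, Hg. symmetry. apply F1.
    + rewrite !hX, <- lthom_act; auto. rewrite Eg. reflexivity.
  - f_equal. symmetry. apply (etaG_clsG L op p spec _ x y H); auto.
Qed.

Lemma etaH_nat (R R' : RTors) op p (spec : SpecR R op p) op' p' (spec' : SpecR R' op' p')
  (f : RTHom R R') (phi : PHom (PPR R op p) (PPR R' op' p'))
  (hX : forall x, ph_X phi x = rh_X f x) :
  forall c, etaH R' op' p' (bh_H (env_hom_data phi) c) = rh_H f (etaH R op p c).
Proof.
  intro c. induction c as [x z H] using cL_ind.
  destruct (proj1 (rt_orb R x z) H) as (h&Hh&Eh).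
  assert (H' : pal (PPR R' op' p') (ph_X phi x) = pal (PPR R' op' p') (ph_X phi z))
    by (rewrite !f_al; cbn in *; congruence).
  transitivity (rh_H f h).
  - apply (etaH_clsG R' op' p' spec' _ (ph_X phi x) (ph_X phi z) H').
    + apply hH_cls.
    + rewrite hX. destruct (rthax f) as ((F1&_)&_&F3&_). rewrite F3, Hh. symmetry. apply F1.
    + rewrite !hX, <- rthom_act; auto. rewrite Eh. reflexivity.
  - f_equal. symmetry. apply (etaH_clsG R op p spec _ x z H); auto.
Qed.

Definition etaLT (T : LTors) : LTHom (bt_lt (fo ENV (fo CL T))) T :=
  Build_LTHom (bt_lt (fo ENV (fo CL T))) T _ (etaL_ax T (cl_op T) (hcl T) (cl_specT T)).
Definition thetaLT (T : LTors) : LTHom T (bt_lt (fo ENV (fo CL T))) :=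
  Build_LTHom T (bt_lt (fo ENV (fo CL T))) _ (thetaL_ax T (cl_op T) (hcl T) (cl_specT T)).

Lemma iv3 : nat_iso (Fcomp U_r (Fcomp ENV CL)) (Fid LTCat).
Proof.
  exists etaLT. split.
  - intro T. exists (thetaLT T). split.
    + apply lthom_ext; try reflexivity. apply functional_extensionality. intro c.
      apply (theta_eta T (cl_op T) (hcl T) (cl_specT T)).
    + apply lthom_ext; try reflexivity. apply functional_extensionality. intro g.
      apply (eta_theta T (cl_op T) (hcl T) (cl_specT T)).
  - intros T T' f. apply lthom_ext; try reflexivity. apply functional_extensionality. intro c.
    apply (etaG_nat T T' (cl_op T) (hcl T) (cl_specT T) (cl_op T') (hcl T') (cl_specT T') f
             (fm CL f)). intro x. reflexivity.
Qed.

Definition etaRT (T : RTors) : RTHom (bt_rt (fo ENV (fo CR T))) T :=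
  Build_RTHom (bt_rt (fo ENV (fo CR T))) T _ (etaR_ax T (cr_op T) (hcr T) (cr_specT T)).
Definition thetaRT (T : RTors) : RTHom T (bt_rt (fo ENV (fo CR T))) :=
  Build_RTHom T (bt_rt (fo ENV (fo CR T))) _ (thetaR_ax T (cr_op T) (hcr T) (cr_specT T)).

Lemma iv4 : nat_iso (Fcomp U_l (Fcomp ENV CR)) (Fid RTCat).
Proof.
  exists etaRT. split.
  - intro T. exists (thetaRT T). split.
    + apply rthom_ext; try reflexivity. apply functional_extensionality. intro c.
      apply (thetaR_eta T (cr_op T) (hcr T) (cr_specT T)).
    + apply rthom_ext; try reflexivity. apply functional_extensionality. intro g.
      apply (etaR_theta T (cr_op T) (hcr T) (cr_specT T)).
  - intros T T' f. apply rthom_ext; try reflexivity. apply functional_extensionality. intro c.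
    apply (etaH_nat T T' (cr_op T) (hcr T) (cr_specT T) (cr_op T') (hcr T') (cr_specT T') f
             (fm CR f)). intro x. reflexivity.
Qed.

Lemma specR_cl (T : BTors) : SpecR (bt_rt T) (cl_op (bt_lt T)) (hcl (bt_lt T)).
Proof.
  intros x y z h Hh Eh Hy.
  assert (H2 : rt_al (bt_rt T) x = rt_al (bt_rt T) z) by (apply rt_orb; eauto).
  change (opT (cl_data (bt_lt T)) x y z = ractT (bt_rt T) y h).
  rewrite <- (op_lr T x y z Hy H2).
  change (pop (cr_data (bt_rt T)) x y z Hy H2 = ractT (bt_rt T) y h).
  rewrite opE. apply cr_specT; auto.
Qed.
Lemma specL_cr (T : BTors) : SpecL (bt_lt T) (cr_op (bt_rt T)) (hcr (bt_rt T)).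
Proof.
  intros x y z g Hg Eg Hz.
  assert (H1 : lt_be (bt_lt T) x = lt_be (bt_lt T) y) by (apply lt_orb; eauto).
  change (opT (cr_data (bt_rt T)) x y z = lactT (bt_lt T) g z).
  rewrite <- (opE (cr_data (bt_rt T)) x y z H1 Hz).
  change (cr_op (bt_rt T) x y z H1 Hz = lactT (bt_lt T) g z).
  rewrite op_lr. exact (cl_specT (bt_lt T) x y z g Hg Eg Hz).
Qed.

Section BT.
Variable T : BTors.
Variable op : forall x y z : bt_X T, bt_be T x = bt_be T y -> bt_al T x = bt_al T z -> bt_X T.
Variable p : pregpd_ax (Build_PData (bt_A T) (bt_B T) (bt_X T) (bt_al T) (bt_be T) op).
Hypothesis sL : SpecL (bt_lt T) op p.
Hypothesis sR : SpecR (bt_rt T) op p.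
Definition etaBT : BTHom (fo ENV (PPL (bt_lt T) op p)) T :=
  Build_BTHom (fo ENV (PPL (bt_lt T) op p)) T
    (@Build_BTHomData (env_data (PPL (bt_lt T) op p)) T
       (fun a => a) (fun b => b) (fun x => x) (etaG (bt_lt T) op p) (etaH (bt_rt T) op p))
    (conj (etaL_ax (bt_lt T) op p sL) (etaR_ax (bt_rt T) op p sR)).
Definition thetaBT : BTHom T (fo ENV (PPL (bt_lt T) op p)) :=
  Build_BTHom T (fo ENV (PPL (bt_lt T) op p))
    (@Build_BTHomData T (env_data (PPL (bt_lt T) op p))
       (fun a => a) (fun b => b) (fun x => x) (thetaG (bt_lt T) op p) (thetaH (bt_rt T) op p))
    (conj (thetaL_ax (bt_lt T) op p sL) (thetaR_ax (bt_rt T) op p sR)).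
Lemma etaBT_iso : is_iso (C := BTCat) etaBT.
Proof.
  exists thetaBT. split.
  - apply bthom_ext; try reflexivity; apply functional_extensionality; intro c.
    + apply (theta_eta (bt_lt T) op p sL).
    + apply (thetaR_eta (bt_rt T) op p sR).
  - apply bthom_ext; try reflexivity; apply functional_extensionality; intro g.
    + apply (eta_theta (bt_lt T) op p sL).
    + apply (etaR_theta (bt_rt T) op p sR).
Qed.
End BT.

Lemma iv1 : nat_iso (Fcomp ENV (Fcomp CL U_r)) (Fid BTCat).
Proof.
  exists (fun T => etaBT T (cl_op (bt_lt T)) (hcl (bt_lt T)) (cl_specT (bt_lt T)) (specR_cl T)).
  split.
  - intro T. apply etaBT_iso.
  - intros T T' f. apply bthom_ext; try reflexivity; apply functional_extensionality; intro c.
    + apply (etaG_nat (bt_lt T) (bt_lt T') _ _ (cl_specT (bt_lt T)) _ _ (cl_specT (bt_lt T'))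
               (bh_lt f) (fm (Fcomp CL U_r) f)). intro x. reflexivity.
    + apply (etaH_nat (bt_rt T) (bt_rt T') _ _ (specR_cl T) _ _ (specR_cl T')
               (bh_rt f) (fm (Fcomp CL U_r) f)). intro x. reflexivity.
Qed.

Lemma iv2 : nat_iso (Fcomp ENV (Fcomp CR U_l)) (Fid BTCat).
Proof.
  exists (fun T => etaBT T (cr_op (bt_rt T)) (hcr (bt_rt T)) (specL_cr T) (cr_specT (bt_rt T))).
  split.
  - intro T. apply etaBT_iso.
  - intros T T' f. apply bthom_ext; try reflexivity; apply functional_extensionality; intro c.
    + apply (etaG_nat (bt_lt T) (bt_lt T') _ _ (specL_cr T) _ _ (specL_cr T')
               (bh_lt f) (fm (Fcomp CR U_l) f)). intro x. reflexivity.
    + apply (etaH_nat (bt_rt T) (bt_rt T') _ _ (cr_specT (bt_rt T)) _ _ (cr_specT (bt_rt T'))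
               (bh_rt f) (fm (Fcomp CR U_l) f)). intro x. reflexivity.
Qed.

Lemma hc_L1 (X Y : Pregpd) (e : X = Y) :
  phom_comp X Y X (@hcast PCat X Y X X e eq_refl (phom_id X))
                  (@hcast PCat X X X Y eq_refl e (phom_id X)) = phom_id X.
Proof. destruct e. apply phom_ext; reflexivity. Qed.
Lemma hc_L1' (X Y : Pregpd) (e : X = Y) :
  phom_comp Y X Y (@hcast PCat X X X Y eq_refl e (phom_id X))
                  (@hcast PCat X Y X X e eq_refl (phom_id X)) = phom_id Y.
Proof. destruct e. apply phom_ext; reflexivity. Qed.
Lemma hc_L2 (X Y a b : Pregpd) (e1 : X = a) (e2 : Y = b) (h : PHom X Y) (f : PHom a b) :
  @hcast PCat X a Y b e1 e2 h = f ->
  phom_comp X Y b (@hcast PCat Y Y Y b eq_refl e2 (phom_id Y)) h =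
  phom_comp X a b f (@hcast PCat X X X a eq_refl e1 (phom_id X)).
Proof. destruct e1, e2. simpl. intros <-. apply phom_ext; reflexivity. Qed.

Lemma feq_natiso (F : Functor PCat PCat) : functor_eq F (Fid PCat) -> nat_iso F (Fid PCat).
Proof.
  intros [e He].
  exists (fun a => @hcast PCat (fo F a) (fo F a) (fo F a) a eq_refl (e a) (phom_id (fo F a))).
  split.
  - intro a. exists (@hcast PCat (fo F a) a (fo F a) (fo F a) (e a) eq_refl (phom_id (fo F a))).
    split; [apply hc_L1 | apply hc_L1'].
  - intros a b f. apply hc_L2. apply He.
Qed.

Lemma fo_eq_natiso_equiv : True. Proof. exact I. Qed.

Theorem theorem2 :
  exists (hcl : forall T : LTors, pregpd_ax (cl_data T))
         (hclm : forall (T T' : LTors) (f : LTHom T T'), phom_ax (cl_hom_data f))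
         (hcr : forall T : RTors, pregpd_ax (cr_data T))
         (hcrm : forall (T T' : RTors) (f : RTHom T T'), phom_ax (cr_hom_data f))
         (henv : forall P : Pregpd, btors_ax (env_data P))
         (henvm : forall (P P' : Pregpd) (f : PHom P P'), bthom_ax (env_hom_data f)),
    (* (i) *)
    (is_equivalence U_l /\ is_equivalence U_r /\
     is_equivalence (c_l hcl hclm) /\ is_equivalence (c_r hcr hcrm) /\
     is_equivalence (env henv henvm)) /\
    (* (ii) *)
    functor_eq (Fcomp (c_r hcr hcrm) U_l) (Fcomp (c_l hcl hclm) U_r) /\
    (* (iii) *)
    functor_eq (Fcomp (c_l hcl hclm) (Fcomp U_r (env henv henvm))) (Fid PCat) /\
    functor_eq (Fcomp (c_r hcr hcrm) (Fcomp U_l (env henv henvm))) (Fid PCat) /\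
    (* (iv) *)
    nat_iso (Fcomp (env henv henvm) (Fcomp (c_l hcl hclm) U_r)) (Fid BTCat) /\
    nat_iso (Fcomp (env henv henvm) (Fcomp (c_r hcr hcrm) U_l)) (Fid BTCat) /\
    nat_iso (Fcomp U_r (Fcomp (env henv henvm) (c_l hcl hclm))) (Fid LTCat) /\
    nat_iso (Fcomp U_l (Fcomp (env henv henvm) (c_r hcr hcrm))) (Fid RTCat).
Proof.
  exists hcl, hclm, hcr, hcrm, henv, henvm.
  fold CL CR ENV.
  pose proof part_ii as E2. pose proof part_iii_l as E3l. pose proof part_iii_r as E3r.
  pose proof iv1 as N1. pose proof iv2 as N2. pose proof iv3 as N3. pose proof iv4 as N4.
  pose proof (feq_natiso _ E3l) as N3l. pose proof (feq_natiso _ E3r) as N3r.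
  pose proof Ur_functor as FUr. pose proof Ul_functor as FUl.
  pose proof CL_functor as FCL. pose proof CR_functor as FCR. pose proof ENV_functor as FENV.
  split; [|split; [exact E2|split; [exact E3l|split; [exact E3r|split; [exact N1|split; [exact N2|split; [exact N3|exact N4]]]]]]].
  split; [|split; [|split; [|split]]].
  - split; auto. exists (Fcomp ENV CR). split; [apply Fcomp_functor; auto|]. split; assumption.
  - split; auto. exists (Fcomp ENV CL). split; [apply Fcomp_functor; auto|]. split; assumption.
  - split; auto. exists (Fcomp U_r ENV). split; [apply Fcomp_functor; auto|]. split; assumption.
  - split; auto. exists (Fcomp U_l ENV). split; [apply Fcomp_functor; auto|]. split; assumption.
  - split; auto. exists (Fcomp CL U_r). split; [apply Fcomp_functor; auto|]. split; assumption.
Qed.
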